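(* Let $n\ge 2$ and let $f:\mathbb{R}^n\to\mathbb{R}$, $f(x)=\sum_{r,q=1}^n a_{rq}x_rx_q^2$ with $a_{rq}=1$ if $r\ge q$ and $a_{rq}=0$ if $r<q$. Let $M=\mathrm{graph}(f)\subset\mathbb{R}^{n+1}$ with induced metric $g$, $p$ the origin, and let $g(t)$, $t\in[0,T)$, be a smooth solution of the Ricci flow $\partial_t g=-2\,\mathrm{Ric}(g)$ on a neighborhood of $p$ in $M$ with $g(0)=g$. Then at $(t,x)=(0,p)$: $g_{ij}=\delta_{ij}$, $Rm=0$, $\partial_t R_{ijkl}=0$ whenever $\{i,j\}\ne\{k,l\}$, and for $1\le i<j\le n$, $$\partial_t R_{ijij}(0,p)=-8\,(n-j+2)<0 .$$ In particular $\partial_t Rm(0,p)\neq 0$.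
   Context: $M$ is identified with $\mathbb{R}^n$ via $x\mapsto (x,f(x))$, giving global coordinates $x_1,\dots,x_n$ on $M$; components of tensors are taken with respect to the coordinate fields $\partial_i$. The curvature tensor convention is the one for which the Gauss equation of the graph reads $R_{ijkl}=h_{il}h_{jk}-h_{ik}h_{jl}$, where $h_{ij}=\partial_i\partial_j f/\sqrt{1+|\nabla f|^2}$ is the second fundamental form; equivalently, for $g$-orthonormal $e_i,e_j$ the sectional curvature of their span is $R_{ijji}$. *)

(* Defs.v *)
From Stdlib Require Import Reals ClassicalEpsilon Arith.
Open Scope R_scope.

Fixpoint Rsum (n : nat) (f : nat -> R) : R :=
  match n with O => 0 | S m => Rsum m f + f m end.

Definition kron (i j : nat) : R := if Nat.eqb i j then 1 else 0.

(* points of R^n are represented as x : nat -> R, coordinates x 0 .. x (n-1)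
   (0-based; coordinate x_{r} of the paper is x (r-1)). *)
Definition upd (x : nat -> R) (k : nat) (s : R) : nat -> R :=
  fun m => if Nat.eqb m k then s else x m.

(* phi has derivative l at s0 within the set A (one-sided at boundary points) *)
Definition deriv_within (phi : R -> R) (A : R -> Prop) (s0 l : R) : Prop :=
  limit1_in (fun s => (phi s - phi s0) / (s - s0)) (fun s => A s /\ s <> s0) l s0.

Definition pdx (f : (nat -> R) -> R) (k : nat) (x : nat -> R) : R :=
  epsilon (inhabits 0) (deriv_within (fun s => f (upd x k s)) (fun _ => True) (x k)).

Definition f_ex (n : nat) (x : nat -> R) : R :=
  Rsum n (fun r => Rsum n (fun q => (if Nat.leb q r then 1 else 0) * x r * (x q)^2)).

(* metric induced on graph(f) in the coordinates x: pullback of the Euclidean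
   metric by x |-> (x, f x), i.e. g_ij = delta_ij + d_i f d_j f *)
Definition graph_metric (f : (nat -> R) -> R) (x : nat -> R) (i j : nat) : R :=
  kron i j + pdx f i x * pdx f j x.

Inductive dir := Dt | Dx (k : nat).
Definition dir_ok (n : nat) (d : dir) : Prop :=
  match d with Dt => True | Dx k => (k < n)%nat end.

Definition has_pd (D : R -> (nat -> R) -> Prop) (d : dir) (F : R -> (nat -> R) -> R)
  (t : R) (x : nat -> R) (l : R) : Prop :=
  match d with
  | Dt => deriv_within (fun s => F s x) (fun s => D s x) t l
  | Dx k => deriv_within (fun s => F t (upd x k s)) (fun s => D t (upd x k s)) (x k) l
  end.

Definition pd (D : R -> (nat -> R) -> Prop) (d : dir) (F : R -> (nat -> R) -> R)
  (t : R) (x : nat -> R) : R :=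
  epsilon (inhabits 0) (has_pd D d F t x).

Definition cont_on (n : nat) (D : R -> (nat -> R) -> Prop) (F : R -> (nat -> R) -> R) : Prop :=
  forall t x, D t x -> forall e, 0 < e -> exists del, 0 < del /\
    forall t' x', D t' x' -> Rabs (t' - t) < del ->
      (forall k, (k < n)%nat -> Rabs (x' k - x k) < del) ->
      Rabs (F t' x' - F t x) < e.

(* C^infinity on D: F lies in a family of continuous functions closed under
   all partial derivatives (so every iterated partial derivative exists on D
   and is continuous) *)
Definition smooth_on (n : nat) (D : R -> (nat -> R) -> Prop) (F : R -> (nat -> R) -> R) : Prop :=
  exists S : (R -> (nat -> R) -> R) -> Prop, S F /\
    forall G, S G -> cont_on n D G /\
      forall d, dir_ok n d -> exists G', S G' /\
        forall t x, D t x -> has_pd D d G t x (G' t x).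

Definition minv (n : nat) (A : nat -> nat -> R) : nat -> nat -> R :=
  epsilon (inhabits (fun _ _ => 0))
    (fun B => forall i j, (i < n)%nat -> (j < n)%nat ->
       Rsum n (fun k => B i k * A k j) = kron i j).

Section Curv.
Variables (n : nat) (g gi : nat -> nat -> R) (dg : nat -> nat -> nat -> R)
          (ddg : nat -> nat -> nat -> nat -> R).
(* dg a b c = d_a g_bc ;  ddg a b c d = d_a d_b g_cd ; gi = g^{-1} *)
(* d_a g^{ml} = - g^{mp} d_a g_pq g^{ql} *)
Definition dgi (a m l : nat) : R :=
  - Rsum n (fun p => Rsum n (fun q => gi m p * dg a p q * gi q l)).
Definition Gam (m j k : nat) : R :=
  / 2 * Rsum n (fun l => gi m l * (dg j k l + dg k j l - dg l j k)).
Definition dGam (i m j k : nat) : R :=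
  / 2 * Rsum n (fun l => dgi i m l * (dg j k l + dg k j l - dg l j k)
                        + gi m l * (ddg i j k l + ddg i k j l - ddg i l j k)).
(* coefficient of d_m in R(d_i,d_j)d_k, R(X,Y)Z = nabla_X nabla_Y Z - nabla_Y nabla_X Z - nabla_[X,Y] Z *)
Definition Rup (i j k m : nat) : R :=
  dGam i m j k - dGam j m i k
  + Rsum n (fun p => Gam p j k * Gam m i p - Gam p i k * Gam m j p).
(* R_ijkl = g(R(d_i,d_j)d_k, d_l); sectional curvature of orthonormal e_i,e_j is R_ijji *)
Definition Riem (i j k l : nat) : R := Rsum n (fun m => Rup i j k m * g m l).
Definition Ric (j k : nat) : R := Rsum n (fun i => Rup i j k i).
End Curv.

Definition dgF (D : R -> (nat -> R) -> Prop) (G : R -> (nat -> R) -> nat -> nat -> R)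
  (t : R) (x : nat -> R) (a b c : nat) : R :=
  pd D (Dx a) (fun t x => G t x b c) t x.
Definition ddgF (D : R -> (nat -> R) -> Prop) (G : R -> (nat -> R) -> nat -> nat -> R)
  (t : R) (x : nat -> R) (a b c d : nat) : R :=
  pd D (Dx a) (fun t x => pd D (Dx b) (fun t x => G t x c d) t x) t x.

Definition RmF (n : nat) (D : R -> (nat -> R) -> Prop) (G : R -> (nat -> R) -> nat -> nat -> R)
  (t : R) (x : nat -> R) (i j k l : nat) : R :=
  Riem n (G t x) (minv n (G t x)) (dgF D G t x) (ddgF D G t x) i j k l.
Definition RicF (n : nat) (D : R -> (nat -> R) -> Prop) (G : R -> (nat -> R) -> nat -> nat -> R)
  (t : R) (x : nat -> R) (j k : nat) : R :=
  Ric n (minv n (G t x)) (dgF D G t x) (ddgF D G t x) j k.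

(* the spacetime domain [0,T) x (-eps,eps)^n (coordinates beyond n are 0) *)
Definition dom (n : nat) (T eps : R) (t : R) (x : nat -> R) : Prop :=
  0 <= t < T /\ (forall k, (k < n)%nat -> Rabs (x k) < eps) /\
  (forall k, (n <= k)%nat -> x k = 0).

Definition origin : nat -> R := fun _ => 0.

Definition is_ricci_flow (n : nat) (D : R -> (nat -> R) -> Prop)
  (G : R -> (nat -> R) -> nat -> nat -> R) : Prop :=
  (forall i j, (i < n)%nat -> (j < n)%nat -> smooth_on n D (fun t x => G t x i j)) /\
  (forall t x, D t x -> forall i j, (i < n)%nat -> (j < n)%nat -> G t x i j = G t x j i) /\
  (forall t x, D t x -> forall v : nat -> R, (exists k, (k < n)%nat /\ v k <> 0) ->
      0 < Rsum n (fun i => Rsum n (fun j => G t x i j * v i * v j))) /\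
  (forall t x, D t x -> forall i j, (i < n)%nat -> (j < n)%nat ->
      has_pd D Dt (fun t x => G t x i j) t x (-2 * RicF n D G t x i j)).

(* Main.v *)
Require Import Defs.
From Stdlib Require Import Reals Arith Lia Lra Psatz ClassicalEpsilon FunctionalExtensionality PropExtensionality.
From Coquelicot Require Derive.
Import Defs.
Open Scope R_scope.

Module MX.
From mathcomp Require Import all_boot all_algebra.
From mathcomp Require Import Rstruct.
Import GRing.Theory.
Local Open Scope ring_scope.
Lemma Rsum_big n (F : nat -> R) : Rsum n F = \sum_(i < n) F i.
Proof.
elim: n => [|n IH]; first by rewrite big_ord0.
by rewrite big_ord_recr /= IH.
Qed.

Definition ext {n} (f : 'I_n -> R) (i : nat) : R := oapp f 0 (insub i).
Lemma extE {n} f (k : 'I_n) : ext f k = f k.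
Proof. by rewrite /ext valK. Qed.

Lemma left_inv_exists (n : nat) (A : nat -> nat -> R) :
  (forall v : nat -> R, (forall j, (j < n)%coq_nat -> Rsum n (fun i => Rmult (v i) (A i j)) = IZR BinNums.Z0) ->
      forall i, (i < n)%coq_nat -> v i = IZR BinNums.Z0) ->
  exists B : nat -> nat -> R, forall i j, (i < n)%coq_nat -> (j < n)%coq_nat ->
     Rsum n (fun k => Rmult (B i k) (A k j)) = kron i j.
Proof.
move=> Hinj.
pose M : 'M[R]_n := \matrix_(i < n, j < n) A i j.
have uM : M \in unitmx.
  rewrite unitmxE unitfE; apply/negP => /det0P [v nz vM].
  pose w := ext (fun k => v ord0 k).
  have Hw : forall i, (i < n)%coq_nat -> w i = 0.
    apply: Hinj => j /ltP jn.
    rewrite Rsum_big.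
    have := congr1 (fun X : 'M_(1,n) => X ord0 (Ordinal jn)) vM.
    rewrite !mxE => H; rewrite -[X in _ = X]H.
    apply: eq_bigr => i _; by rewrite /w extE mxE.
  move/eqP: nz; apply; apply/rowP => k; rewrite mxE.
  have := Hw k (elimT ltP (ltn_ord k)); by rewrite /w extE.
exists (fun i k => ext (fun i' => ext (fun k' => invmx M i' k') k) i).
move=> i j /ltP iN /ltP jN.
rewrite Rsum_big.
have := congr1 (fun X : 'M_n => X (Ordinal iN) (Ordinal jN)) (mulVmx uM).
rewrite !mxE => H.
have -> : kron i j = (Ordinal iN == Ordinal jN)%:R.
  rewrite -[Ordinal iN == _]/(i == j) /kron.
  by case: (Nat.eqb_spec i j) => [->|ne]; [rewrite eqxx | case: eqP].
rewrite -H; apply: eq_bigr => k _.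
by rewrite (extE _ (Ordinal iN)) extE mxE.
Qed.
End MX.

Lemma Rsum_ext n f g : (forall i, (i < n)%nat -> f i = g i) -> Rsum n f = Rsum n g.
Proof. induction n; simpl; intros H; auto. rewrite IHn by (intros; apply H; lia). rewrite H by lia; auto. Qed.

Lemma Rsum_plus n f g : Rsum n (fun i => f i + g i) = Rsum n f + Rsum n g.
Proof. induction n; simpl; [lra|rewrite IHn; lra]. Qed.
Lemma Rsum_minus n f g : Rsum n (fun i => f i - g i) = Rsum n f - Rsum n g.
Proof. induction n; simpl; [lra|rewrite IHn; lra]. Qed.
Lemma Rsum_opp n f : Rsum n (fun i => - f i) = - Rsum n f.
Proof. induction n; simpl; [lra|rewrite IHn; lra]. Qed.
Lemma Rsum_scal n c f : Rsum n (fun i => c * f i) = c * Rsum n f.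
Proof. induction n; simpl; [lra|rewrite IHn; lra]. Qed.
Lemma Rsum_scal_r n c f : Rsum n (fun i => f i * c) = Rsum n f * c.
Proof. induction n; simpl; [lra|rewrite IHn; lra]. Qed.
Lemma Rsum_zero n : Rsum n (fun _ => 0) = 0.
Proof. induction n; simpl; [lra|rewrite IHn; lra]. Qed.
Lemma Rsum_zero' n f : (forall i, (i < n)%nat -> f i = 0) -> Rsum n f = 0.
Proof. intros H; rewrite (Rsum_ext n f (fun _ => 0)) by auto; apply Rsum_zero. Qed.
Lemma Rsum_swap n m (f : nat -> nat -> R) :
  Rsum n (fun i => Rsum m (fun j => f i j)) = Rsum m (fun j => Rsum n (fun i => f i j)).
Proof.
  induction n; simpl. now rewrite Rsum_zero.
  rewrite IHn, <- Rsum_plus. reflexivity.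
Qed.

Lemma kron_sym i j : kron i j = kron j i.
Proof. unfold kron. rewrite Nat.eqb_sym. auto. Qed.
Lemma kron_eq i : kron i i = 1.
Proof. unfold kron. rewrite Nat.eqb_refl. auto. Qed.
Lemma kron_neq i j : i <> j -> kron i j = 0.
Proof. intros. unfold kron. destruct (Nat.eqb_spec i j); [lia|auto]. Qed.

Lemma Rsum_kron n k f : (k < n)%nat -> Rsum n (fun i => kron i k * f i) = f k.
Proof.
  induction n; intros Hk; [lia|simpl].
  destruct (Nat.eq_dec k n) as [->|ne].
  - rewrite Rsum_zero'. rewrite kron_eq; lra. intros i Hi. rewrite kron_neq by lia. lra.
  - rewrite IHn by lia. rewrite kron_neq by lia. lra.
Qed.
Lemma Rsum_kron' n k f : (k < n)%nat -> Rsum n (fun i => kron k i * f i) = f k.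
Proof. intros. rewrite <- (Rsum_kron n k f H). apply Rsum_ext. intros. now rewrite kron_sym. Qed.

Lemma Rsum_abs n f B : (forall i, (i < n)%nat -> Rabs (f i) <= B) -> Rabs (Rsum n f) <= INR n * B.
Proof.
  induction n; intros H; cbn [Rsum]. simpl INR. rewrite Rabs_R0. lra.
  rewrite S_INR. eapply Rle_trans. apply Rabs_triang.
  assert (Rabs (Rsum n f) <= INR n * B) by (apply IHn; intros; apply H; lia).
  assert (Rabs (f n) <= B) by (apply H; lia). lra.
Qed.

Lemma lim_const (P : R -> Prop) c x0 : limit1_in (fun _ => c) P c x0.
Proof. intros e He. exists 1. split. lra. intros. simpl. unfold R_dist. rewrite Rminus_diag, Rabs_R0. auto. Qed.

Lemma lim_ext (P : R -> Prop) f g l x0 : (forall x, P x -> f x = g x) ->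
  limit1_in f P l x0 -> limit1_in g P l x0.
Proof.
  intros E H e He. destruct (H e He) as [a [Ha Hb]]. exists a. split; auto.
  intros x [Px Hx]. rewrite <- E by auto. apply Hb. auto.
Qed.

Lemma lim_eq (P : R -> Prop) f l l' x0 : l = l' -> limit1_in f P l x0 -> limit1_in f P l' x0.
Proof. intros ->; auto. Qed.

Lemma lim_Rsum n (P : R -> Prop) (f : nat -> R -> R) l x0 :
  (forall i, (i < n)%nat -> limit1_in (f i) P (l i) x0) ->
  limit1_in (fun x => Rsum n (fun i => f i x)) P (Rsum n l) x0.
Proof.
  induction n; intros H; simpl. apply lim_const.
  apply limit_plus. apply IHn; intros; apply H; lia. apply H; lia.
Qed.

Lemma lim_plus P f g l l' x0 : limit1_in f P l x0 -> limit1_in g P l' x0 -> limit1_in (fun x => f x + g x) P (l + l') x0.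
Proof. apply limit_plus. Qed.
Lemma lim_minus P f g l l' x0 : limit1_in f P l x0 -> limit1_in g P l' x0 -> limit1_in (fun x => f x - g x) P (l - l') x0.
Proof. apply limit_minus. Qed.
Lemma lim_mul P f g l l' x0 : limit1_in f P l x0 -> limit1_in g P l' x0 -> limit1_in (fun x => f x * g x) P (l * l') x0.
Proof. apply limit_mul. Qed.
Lemma lim_opp P f l x0 : limit1_in f P l x0 -> limit1_in (fun x => - f x) P (- l) x0.
Proof. apply limit_Ropp. Qed.
Lemma lim_scal P c f l x0 : limit1_in f P l x0 -> limit1_in (fun x => c * f x) P (c * l) x0.
Proof. intros; apply lim_mul; auto; apply lim_const. Qed.

Lemma dpl_dw phi A s0 l : derivable_pt_lim phi s0 l -> deriv_within phi A s0 l.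
Proof.
  intros H e He. destruct (H e He) as [d Hd]. exists d. split. apply cond_pos.
  intros s [[_ Hs] Hds]. simpl in *. unfold R_dist in *.
  specialize (Hd (s - s0)). replace (s0 + (s - s0)) with s in Hd by ring.
  apply Hd. lra. auto.
Qed.

Lemma dw_dpl phi A s0 l r : 0 < r -> (forall s, Rabs (s - s0) < r -> A s) ->
  deriv_within phi A s0 l -> derivable_pt_lim phi s0 l.
Proof.
  intros Hr HA H e He. destruct (H e He) as [d [Hd Hd']].
  assert (Hm : 0 < Rmin d r) by (apply Rmin_pos; auto).
  exists (mkposreal _ Hm). intros h Hh Hhr. simpl in Hhr.
  specialize (Hd' (s0 + h)). simpl in Hd'. unfold R_dist in Hd'.
  replace (s0 + h - s0) with h in Hd' by ring. apply Hd'. split. split.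
  apply HA. replace (s0 + h - s0) with h by ring. eapply Rlt_le_trans; [apply Hhr|apply Rmin_r].
  lra. eapply Rlt_le_trans; [apply Hhr|apply Rmin_l].
Qed.

Lemma dw_unique phi A s0 l1 l2 :
  (forall d, 0 < d -> exists s, A s /\ s <> s0 /\ Rabs (s - s0) < d) ->
  deriv_within phi A s0 l1 -> deriv_within phi A s0 l2 -> l1 = l2.
Proof.
  intros Had H1 H2. eapply single_limit; [|apply H1|apply H2].
  intros a Ha. destruct (Had a Ha) as [s [As [ns Hs]]]. exists s. split. split; auto. apply Hs.
Qed.

Lemma dw_ext phi psi A s0 l : A s0 -> (forall s, A s -> phi s = psi s) ->
  deriv_within phi A s0 l -> deriv_within psi A s0 l.
Proof.
  intros As0 E H. unfold deriv_within. eapply lim_ext; [|apply H].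
  intros s [As _]. simpl. rewrite !E; auto.
Qed.

Lemma dw_sub phi A A' s0 l : (forall s, A' s -> A s) -> deriv_within phi A s0 l -> deriv_within phi A' s0 l.
Proof.
  intros HA H e He. destruct (H e He) as [d [Hd Hd']]. exists d. split; auto.
  intros s [[As ns] Hs]. apply Hd'. split; auto.
Qed.

Lemma dw_eq phi A s0 l l' : l = l' -> deriv_within phi A s0 l -> deriv_within phi A s0 l'.
Proof. intros ->; auto. Qed.

Lemma upd_same x k : upd x k (x k) = x.
Proof. apply functional_extensionality. intros m. unfold upd. destruct (Nat.eqb_spec m k); subst; auto. Qed.
Lemma upd_upd x k a b : upd (upd x k a) k b = upd x k b.
Proof. apply functional_extensionality. intros m. unfold upd. destruct (Nat.eqb_spec m k); auto. Qed.
Lemma upd_eq x k s : upd x k s k = s.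
Proof. unfold upd. now rewrite Nat.eqb_refl. Qed.
Lemma upd_neq x k s m : m <> k -> upd x k s m = x m.
Proof. intros. unfold upd. destruct (Nat.eqb_spec m k); auto; lia. Qed.

Section Dom.
Variables (n : nat) (T eps : R).
Hypothesis (hT : 0 < T) (heps : 0 < eps).
Notation D := (dom n T eps).

Lemma dom_upd t x k s : D t x -> (k < n)%nat -> Rabs s < eps -> D t (upd x k s).
Proof.
  intros [Ht [Hx Hz]] Hk Hs. split; auto. split.
  - intros m Hm. unfold upd. destruct (Nat.eqb_spec m k); auto.
  - intros m Hm. unfold upd. destruct (Nat.eqb_spec m k); [lia|auto].
Qed.
Lemma dom_upd_inv t x k s : D t (upd x k s) -> (k < n)%nat -> Rabs s < eps.
Proof. intros [_ [Hx _]] Hk. specialize (Hx k Hk). now rewrite upd_eq in Hx. Qed.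
Lemma dom_time t s x : D t x -> 0 <= s < T -> D s x.
Proof. intros [_ H] Hs. split; auto. Qed.
Lemma dom_time_inv t x : D t x -> 0 <= t < T.
Proof. intros [H _]; auto. Qed.

Lemma adh_t t : 0 <= t < T -> forall d, 0 < d -> exists s, (0 <= s < T) /\ s <> t /\ Rabs (s - t) < d.
Proof.
  intros Ht d Hd. exists (t + Rmin d (T - t) / 2).
  assert (0 < Rmin d (T - t)) by (apply Rmin_pos; lra).
  pose proof (Rmin_l d (T - t)). pose proof (Rmin_r d (T - t)).
  split; [lra|split; [lra|]]. rewrite Rabs_right; lra.
Qed.
Lemma adh_x c : Rabs c < eps -> forall d, 0 < d -> exists s, Rabs s < eps /\ s <> c /\ Rabs (s - c) < d.
Proof.
  intros Hc d Hd.
  assert (0 < Rmin d (eps - Rabs c)) by (apply Rmin_pos; lra).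
  pose proof (Rmin_l d (eps - Rabs c)). pose proof (Rmin_r d (eps - Rabs c)).
  destruct (Rle_lt_dec 0 c).
  - exists (c - Rmin d (eps - Rabs c) / 2).
    unfold Rabs in *; repeat destruct Rcase_abs; split; try split; lra.
  - exists (c + Rmin d (eps - Rabs c) / 2).
    unfold Rabs in *; repeat destruct Rcase_abs; split; try split; lra.
Qed.

Lemma has_pd_unique d F t x l1 l2 : D t x -> dir_ok n d ->
  has_pd D d F t x l1 -> has_pd D d F t x l2 -> l1 = l2.
Proof.
  intros Hx Hd. destruct d as [|k]; simpl; apply dw_unique.
  - intros de Hde. destruct (adh_t t (dom_time_inv _ _ Hx) de Hde) as [s [Hs Hs']].
    exists s. split; auto. eapply dom_time; eauto.
  - intros de Hde. destruct Hx as [Ht [Hb Hz]]. destruct (adh_x (x k) (Hb k Hd) de Hde) as [s [Hs Hs']].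
    exists s. split; auto. apply dom_upd; auto. split; auto.
Qed.

Lemma pd_eq d F t x l : D t x -> dir_ok n d -> has_pd D d F t x l -> pd D d F t x = l.
Proof.
  intros Hx Hd H. unfold pd. eapply has_pd_unique; eauto.
  apply epsilon_spec. exists l; auto.
Qed.

Lemma pd_spec d F t x : D t x -> dir_ok n d -> (exists l, has_pd D d F t x l) -> has_pd D d F t x (pd D d F t x).
Proof. intros Hx Hd [l H]. rewrite (pd_eq d F t x l); auto. Qed.

Lemma has_pd_ext d F F' t x l : D t x -> (forall t' x', D t' x' -> F t' x' = F' t' x') ->
  has_pd D d F t x l -> has_pd D d F' t x l.
Proof.
  intros Hx E. destruct d as [|k]; simpl; intros H.
  - eapply dw_ext; [|intros s Hs; apply E; apply Hs|apply H]. simpl; auto.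
  - eapply dw_ext; [|intros s Hs; apply E; apply Hs|apply H]. simpl. rewrite upd_same; auto.
Qed.

Lemma pd_ext d F F' t x : D t x -> dir_ok n d -> (forall t' x', D t' x' -> F t' x' = F' t' x') ->
  pd D d F t x = pd D d F' t x.
Proof.
  intros Hx Hd E. unfold pd. f_equal. apply functional_extensionality. intros l.
  apply propositional_extensionality. split; apply has_pd_ext; auto.
  intros; symmetry; auto.
Qed.

Lemma cont_ext F F' : (forall t' x', D t' x' -> F t' x' = F' t' x') -> cont_on n D F -> cont_on n D F'.
Proof.
  intros E H t x Hx e He. destruct (H t x Hx e He) as [de [Hde Hd]]. exists de. split; auto.
  intros t' x' Hx' H1 H2. rewrite <- !E; auto.
Qed.

Lemma smooth_ext F F' : (forall t' x', D t' x' -> F t' x' = F' t' x') -> smooth_on n D F -> smooth_on n D F'.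
Proof.
  intros E [S [SF HS]].
  exists (fun G => exists G0, S G0 /\ forall t x, D t x -> G t x = G0 t x). split.
  - exists F. split; auto. intros; symmetry; auto.
  - intros G [G0 [SG0 EG]]. destruct (HS G0 SG0) as [C Dd]. split.
    + eapply cont_ext; [|apply C]. intros; symmetry; auto.
    + intros d Hd. destruct (Dd d Hd) as [G' [SG' HG']]. exists G'. split.
      * exists G'. split; auto.
      * intros t x Hx. eapply has_pd_ext; [auto| |apply HG'; auto]. intros; symmetry; auto.
Qed.

Lemma smooth_cont F : smooth_on n D F -> cont_on n D F.
Proof. intros [S [SF HS]]. apply (HS F SF). Qed.

Lemma smooth_pd F d : smooth_on n D F -> dir_ok n d ->
  smooth_on n D (pd D d F) /\ forall t x, D t x -> has_pd D d F t x (pd D d F t x).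
Proof.
  intros Hs Hd. destruct Hs as [S [SF HS]]. destruct (HS F SF) as [_ Dd].
  destruct (Dd d Hd) as [G' [SG' HG']].
  assert (E : forall t x, D t x -> pd D d F t x = G' t x) by (intros; apply pd_eq; auto).
  split.
  - apply smooth_ext with G'. intros; symmetry; auto. exists S; split; auto.
  - intros t x Hx. rewrite E; auto.
Qed.

Lemma has_pd_x_dpl k F t x l : D t x -> (k < n)%nat -> has_pd D (Dx k) F t x l ->
  derivable_pt_lim (fun s => F t (upd x k s)) (x k) l.
Proof.
  intros Hx Hk H. simpl in H. destruct Hx as [Ht [Hb Hz]].
  apply dw_dpl with (A := fun s => D t (upd x k s)) (r := eps - Rabs (x k)); auto.
  specialize (Hb k Hk). lra.
  intros s Hs. apply dom_upd; auto. split; auto.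
  pose proof (Rabs_triang_inv s (x k)). lra.
Qed.

Lemma dpl_has_pd_x k F t x l : derivable_pt_lim (fun s => F t (upd x k s)) (x k) l -> has_pd D (Dx k) F t x l.
Proof. intros H. simpl. apply dpl_dw. auto. Qed.

Lemma has_pd_t_dpl F t x l : D t x -> 0 < t -> has_pd D Dt F t x l ->
  derivable_pt_lim (fun s => F s x) t l.
Proof.
  intros Hx Ht H. simpl in H. pose proof (dom_time_inv _ _ Hx).
  apply dw_dpl with (A := fun s => D s x) (r := Rmin t (T - t)); auto.
  apply Rmin_pos; lra.
  intros s Hs. eapply dom_time; eauto. pose proof (Rmin_l t (T - t)). pose proof (Rmin_r t (T - t)).
  unfold Rabs in Hs; destruct Rcase_abs in Hs; lra.
Qed.

End Dom.

Lemma dpl_ext f g x l : (forall s, f s = g s) -> derivable_pt_lim f x l -> derivable_pt_lim g x l.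
Proof. intros E H. replace g with f; auto. apply functional_extensionality; auto. Qed.
Lemma dpl_eq f x l l' : l = l' -> derivable_pt_lim f x l -> derivable_pt_lim f x l'.
Proof. intros ->; auto. Qed.
Lemma dpl_plus f g x l1 l2 : derivable_pt_lim f x l1 -> derivable_pt_lim g x l2 ->
  derivable_pt_lim (fun s => f s + g s) x (l1 + l2).
Proof. intros. exact (derivable_pt_lim_plus f g x l1 l2 H H0). Qed.
Lemma dpl_minus f g x l1 l2 : derivable_pt_lim f x l1 -> derivable_pt_lim g x l2 ->
  derivable_pt_lim (fun s => f s - g s) x (l1 - l2).
Proof. intros. exact (derivable_pt_lim_minus f g x l1 l2 H H0). Qed.
Lemma dpl_mult f g x l1 l2 : derivable_pt_lim f x l1 -> derivable_pt_lim g x l2 ->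
  derivable_pt_lim (fun s => f s * g s) x (l1 * g x + f x * l2).
Proof. intros. exact (derivable_pt_lim_mult f g x l1 l2 H H0). Qed.
Lemma dpl_const c x : derivable_pt_lim (fun _ => c) x 0.
Proof. apply derivable_pt_lim_const. Qed.
Lemma dpl_id x : derivable_pt_lim (fun s => s) x 1.
Proof. apply derivable_pt_lim_id. Qed.
Lemma dpl_Rsum N (phi : nat -> R -> R) l s0 :
  (forall i, (i < N)%nat -> derivable_pt_lim (phi i) s0 (l i)) ->
  derivable_pt_lim (fun s => Rsum N (fun i => phi i s)) s0 (Rsum N l).
Proof.
  induction N; intros H; simpl. apply dpl_const.
  apply dpl_plus. apply IHN; intros; apply H; lia. apply H; lia.
Qed.
Lemma dpl_upd x k m : derivable_pt_lim (fun s => upd x k s m) (x k) (kron m k).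
Proof.
  unfold upd, kron. destruct (Nat.eqb m k). apply dpl_id. apply dpl_const.
Qed.

Definition cc (q r : nat) : R := if Nat.leb q r then 1 else 0.

Definition df (n k : nat) (x : nat -> R) : R :=
  Rsum n (fun q => cc q k * (x q)^2) + 2 * x k * Rsum n (fun r => cc k r * x r).
Definition d2f (n a k : nat) (x : nat -> R) : R :=
  2 * cc a k * x a + 2 * kron k a * Rsum n (fun r => cc k r * x r) + 2 * x k * cc k a.
Definition Tf (a k b : nat) : R :=
  2 * cc a k * kron a b + 2 * kron k a * cc k b + 2 * kron k b * cc k a.

Lemma f_ex_cc n x : f_ex n x = Rsum n (fun r => Rsum n (fun q => cc q r * x r * (x q)^2)).
Proof. reflexivity. Qed.

Lemma dpl_f n k x : (k < n)%nat ->
  derivable_pt_lim (fun s => f_ex n (upd x k s)) (x k) (df n k x).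
Proof.
  intros Hk. unfold f_ex.
  eapply dpl_eq; [|apply dpl_Rsum; intros r Hr; apply dpl_Rsum; intros q Hq;
     eapply dpl_ext; [intros s; instantiate (1 := fun s => (cc q r * upd x k s r) * (upd x k s q * upd x k s q)); simpl; unfold cc; ring|];
     apply dpl_mult; [apply dpl_mult; [apply dpl_const|apply dpl_upd]|apply dpl_mult; apply dpl_upd]].
  cbv beta. rewrite upd_same. unfold df.
  rewrite (Rsum_ext n _ (fun r => Rsum n (fun q => kron r k * (cc q r * x q ^ 2)) + Rsum n (fun q => kron q k * (2 * x q * (cc q r * x r))))).
  2:{ intros r Hr. rewrite <- Rsum_plus. apply Rsum_ext; intros; ring. }
  rewrite Rsum_plus.
  rewrite (Rsum_swap n n (fun r q => kron q k * (2 * x q * (cc q r * x r)))).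
  rewrite (Rsum_ext n (fun r => Rsum n (fun q => kron r k * (cc q r * x q ^ 2))) (fun r => kron r k * Rsum n (fun q => cc q r * x q ^ 2))) by (intros; apply Rsum_scal).
  rewrite (Rsum_ext n (fun q => Rsum n (fun r => kron q k * (2 * x q * (cc q r * x r)))) (fun q => kron q k * (2 * x q * Rsum n (fun r => cc q r * x r)))).
  2:{ intros. rewrite Rsum_scal, Rsum_scal. auto. }
  rewrite !Rsum_kron by auto. ring.
Qed.

Lemma dpl_df n a k x : (a < n)%nat ->
  derivable_pt_lim (fun s => df n k (upd x a s)) (x a) (d2f n a k x).
Proof.
  intros Ha. unfold df.
  eapply dpl_eq; [|apply dpl_plus;
    [apply dpl_Rsum; intros q Hq; eapply dpl_ext;
       [intros s; instantiate (1 := fun s => cc q k * (upd x a s q * upd x a s q)); simpl; ring|];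
       apply dpl_mult; [apply dpl_const|apply dpl_mult; apply dpl_upd]
    |apply dpl_mult; [apply dpl_mult; [apply dpl_const|apply dpl_upd]
                     |apply dpl_Rsum; intros r Hr; apply dpl_mult; [apply dpl_const|apply dpl_upd]]]].
  cbv beta. rewrite upd_same. unfold d2f.
  rewrite (Rsum_ext n (fun q => 0 * (x q * x q) + cc q k * (kron q a * x q + x q * kron q a)) (fun q => kron q a * (2 * cc q k * x q))) by (intros; ring).
  rewrite (Rsum_ext n (fun r => 0 * x r + cc k r * kron r a) (fun r => kron r a * cc k r)) by (intros; ring).
  rewrite !Rsum_kron by auto. ring.
Qed.

Lemma dpl_d2f n a k b x : (b < n)%nat ->
  derivable_pt_lim (fun s => d2f n a k (upd x b s)) (x b) (Tf a k b).
Proof.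
  intros Hb. unfold d2f.
  eapply dpl_eq; [|apply dpl_plus; [apply dpl_plus|]].
  2:{ apply dpl_mult; [apply dpl_const|apply dpl_upd]. }
  2:{ apply dpl_mult; [apply dpl_const|apply dpl_Rsum; intros r Hr; apply dpl_mult; [apply dpl_const|apply dpl_upd]]. }
  2:{ apply dpl_mult; [apply dpl_mult; [apply dpl_const|apply dpl_upd]|apply dpl_const]. }
  cbv beta.
  rewrite upd_same. rewrite (Rsum_ext n (fun r => 0 * x r + cc k r * kron r b) (fun r => kron r b * cc k r)) by (intros; ring).
  rewrite !Rsum_kron by auto. unfold Tf. rewrite (kron_sym a b). ring.
Qed.

Definition gm n x i j := kron i j + df n i x * df n j x.
Definition dg0 n x a i j := d2f n a i x * df n j x + df n i x * d2f n a j x.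
Definition ddg0 n x a b i j :=
  Tf b i a * df n j x + d2f n b i x * d2f n a j x + d2f n a i x * d2f n b j x + df n i x * Tf b j a.

Lemma dpl_gm n x a i j : (a < n)%nat ->
  derivable_pt_lim (fun s => gm n (upd x a s) i j) (x a) (dg0 n x a i j).
Proof.
  intros Ha. unfold gm.
  eapply dpl_eq; [|apply dpl_plus; [apply dpl_const|apply dpl_mult; apply dpl_df; auto]].
  cbv beta. rewrite upd_same. unfold dg0. ring.
Qed.

Lemma dpl_dg0 n x a b i j : (a < n)%nat ->
  derivable_pt_lim (fun s => dg0 n (upd x a s) b i j) (x a) (ddg0 n x a b i j).
Proof.
  intros Ha. unfold dg0.
  eapply dpl_eq; [|apply dpl_plus; apply dpl_mult; (apply dpl_df || apply dpl_d2f); auto].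
  cbv beta. rewrite upd_same. unfold ddg0. ring.
Qed.

Lemma pdx_f n k x : (k < n)%nat -> pdx (f_ex n) k x = df n k x.
Proof.
  intros Hk. unfold pdx.
  assert (H : deriv_within (fun s => f_ex n (upd x k s)) (fun _ => True) (x k) (df n k x))
    by (apply dpl_dw, dpl_f; auto).
  eapply dw_unique; [| apply epsilon_spec; exists (df n k x); exact H | exact H].
  intros d Hd. exists (x k + d / 2). repeat split; try lra. rewrite Rabs_right; lra.
Qed.

Lemma graph_metric_gm n x i j : (i < n)%nat -> (j < n)%nat -> graph_metric (f_ex n) x i j = gm n x i j.
Proof. intros. unfold graph_metric, gm. rewrite !pdx_f; auto. Qed.

Lemma Rsum_le n f g : (forall i, (i < n)%nat -> f i <= g i) -> Rsum n f <= Rsum n g.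
Proof. induction n; intros H; simpl. lra. assert (f n <= g n) by (apply H; lia).
  assert (Rsum n f <= Rsum n g) by (apply IHn; intros; apply H; lia). lra. Qed.
Lemma Rsum_Rabs n f : Rabs (Rsum n f) <= Rsum n (fun i => Rabs (f i)).
Proof. induction n; simpl. rewrite Rabs_R0; lra.
  eapply Rle_trans. apply Rabs_triang. lra. Qed.
Lemma Rsum_const n c : Rsum n (fun _ => c) = INR n * c.
Proof. induction n; simpl Rsum. simpl; lra. rewrite IHn, S_INR. ring. Qed.
Lemma Rsum_kron_row n i : (i < n)%nat -> Rsum n (fun j => Rabs (kron i j)) = 1.
Proof. intros. rewrite (Rsum_ext n _ (fun j => kron j i * 1)). rewrite Rsum_kron; auto; lra.
  intros j Hj. unfold kron. rewrite Nat.eqb_sym. destruct (Nat.eqb j i); rewrite ?Rabs_R1, ?Rabs_R0; lra. Qed.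

Lemma minv_near n (A : nat -> nat -> R) al : 0 <= al -> INR n * al <= 1/2 ->
  (forall i j, (i < n)%nat -> (j < n)%nat -> Rabs (A i j - kron i j) <= al) ->
  (forall i j, (i < n)%nat -> (j < n)%nat -> Rsum n (fun k => minv n A i k * A k j) = kron i j) /\
  (forall i j, (i < n)%nat -> (j < n)%nat -> Rabs (minv n A i j - kron i j) <= 2 * al).
Proof.
  intros Hal Hn HA.
  assert (Hex : exists B : nat -> nat -> R, forall i j, (i < n)%nat -> (j < n)%nat ->
     Rsum n (fun k => B i k * A k j) = kron i j).
  { apply MX.left_inv_exists. intros v Hv.
    set (S := Rsum n (fun i => Rabs (v i))).
    assert (Hj : forall j, (j < n)%nat -> Rabs (v j) <= al * S).
    { intros j Hjn.
      assert (E : v j = Rsum n (fun i => v i * (kron i j - A i j))).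
      { rewrite (Rsum_ext n _ (fun i => kron i j * v i - v i * A i j)); [|intros; ring].
        rewrite Rsum_minus, Rsum_kron, Hv by auto; ring. }
      rewrite E. eapply Rle_trans. apply Rsum_Rabs. unfold S. rewrite <- Rsum_scal.
      apply Rsum_le. intros i Hi. rewrite Rabs_mult. rewrite Rmult_comm.
      apply Rmult_le_compat_r. apply Rabs_pos. rewrite Rabs_minus_sym. apply HA; auto. }
    assert (HS : S <= INR n * (al * S)).
    { unfold S at 1. rewrite <- Rsum_const. apply Rsum_le. auto. }
    assert (S0 : 0 <= S) by (unfold S; rewrite <- (Rsum_zero n); apply Rsum_le; intros; apply Rabs_pos).
    assert (S = 0) by nra.
    intros i Hi. specialize (Hj i Hi). rewrite H, Rmult_0_r in Hj. pose proof (Rabs_pos (v i)).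
    destruct (Req_dec (v i) 0) as [E0|E0]; auto. pose proof (Rabs_pos_lt _ E0). lra. }
  assert (HB : forall i j, (i < n)%nat -> (j < n)%nat -> Rsum n (fun k => minv n A i k * A k j) = kron i j).
  { unfold minv. apply epsilon_spec with (P := fun B => forall i j, (i < n)%nat -> (j < n)%nat ->
       Rsum n (fun k => B i k * A k j) = kron i j). exact Hex. }
  split; auto.
  set (B := minv n A) in *.
  assert (E : forall i j, (i < n)%nat -> (j < n)%nat -> B i j - kron i j = Rsum n (fun k => B i k * (kron k j - A k j))).
  { intros i j Hi Hj. rewrite (Rsum_ext n _ (fun k => kron k j * B i k - B i k * A k j)); [|intros; ring].
    rewrite Rsum_minus, Rsum_kron, HB; auto. }
  assert (Hrow : forall i j, (i < n)%nat -> (j < n)%nat -> Rabs (B i j - kron i j) <= al * Rsum n (fun k => Rabs (B i k))).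
  { intros i j Hi Hj. rewrite E by auto. eapply Rle_trans. apply Rsum_Rabs. rewrite <- Rsum_scal.
    apply Rsum_le. intros k Hk. rewrite Rabs_mult, Rmult_comm. apply Rmult_le_compat_r. apply Rabs_pos.
    rewrite Rabs_minus_sym. apply HA; auto. }
  intros i j Hi Hj.
  assert (Hb : Rsum n (fun k => Rabs (B i k)) <= 2).
  { assert (Hb1 : Rsum n (fun k => Rabs (B i k)) <= 1 + INR n * (al * Rsum n (fun k => Rabs (B i k)))).
    { rewrite <- (Rsum_kron_row n i Hi). rewrite <- Rsum_const, <- Rsum_plus. apply Rsum_le.
      intros k Hk. pose proof (Hrow i k Hi Hk). pose proof (Rabs_triang_inv (B i k) (kron i k)). lra. }
    assert (0 <= Rsum n (fun k => Rabs (B i k))) by (rewrite <- (Rsum_zero n); apply Rsum_le; intros; apply Rabs_pos).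
    nra. }
  pose proof (Hrow i j Hi Hj). nra.
Qed.

Definition btw a b x := Rmin a b <= x <= Rmax a b.

Lemma mvt f df a b : (forall x, btw a b x -> derivable_pt_lim f x (df x)) ->
  exists c, btw a b c /\ f b - f a = df c * (b - a).
Proof.
  intros H. destruct (Derive.MVT_gen f a b df) as [c [Hc E]].
  - intros x Hx. apply Derive.is_derive_Reals. apply H. unfold btw; lra.
  - intros x Hx. apply derivable_continuous_pt. exists (df x). apply H. auto.
  - exists c; auto.
Qed.

Lemma mvt2 (Phi Phw Phwu : R -> R -> R) h w0 :
  (forall u w, btw 0 h u -> btw 0 w0 w -> derivable_pt_lim (fun w' => Phi u w') w (Phw u w)) ->
  (forall u w, btw 0 h u -> btw 0 w0 w -> derivable_pt_lim (fun u' => Phw u' w) u (Phwu u w)) ->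
  exists u1 w1, btw 0 h u1 /\ btw 0 w0 w1 /\
    Phi h w0 - Phi h 0 - Phi 0 w0 + Phi 0 0 = h * w0 * Phwu u1 w1.
Proof.
  intros H1 H2.
  assert (Bh : btw 0 h h) by (unfold btw, Rmin, Rmax; destruct Rle_dec; lra).
  assert (B0 : btw 0 h 0) by (unfold btw, Rmin, Rmax; destruct Rle_dec; lra).
  destruct (mvt (fun w => Phi h w - Phi 0 w) (fun w => Phw h w - Phw 0 w) 0 w0) as [w1 [Hw1 E1]].
  { intros w Hw. apply dpl_minus; apply H1; auto. }
  destruct (mvt (fun u => Phw u w1) (fun u => Phwu u w1) 0 h) as [u1 [Hu1 E2]].
  { intros u Hu. apply H2; auto. }
  exists u1, w1. repeat split; try apply Hu1; try apply Hw1.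
  simpl in *. replace (Phi h w0 - Phi h 0 - Phi 0 w0 + Phi 0 0) with ((Phi h w0 - Phi 0 w0) - (Phi h 0 - Phi 0 0)) by ring.
  rewrite E1, E2. ring.
Qed.

Lemma dpl_shift f c w l : derivable_pt_lim f (c + w) l -> derivable_pt_lim (fun w' => f (c + w')) w l.
Proof.
  intros H e He. destruct (H e He) as [d Hd]. exists d. intros h Hh Hhd.
  replace (c + (w + h)) with (c + w + h) by ring. apply Hd; auto.
Qed.
Lemma dpl_shift' f c w l : derivable_pt_lim f (w + c) l -> derivable_pt_lim (fun w' => f (w' + c)) w l.
Proof.
  intros H e He. destruct (H e He) as [d Hd]. exists d. intros h Hh Hhd.
  replace (w + h + c) with (w + c + h) by ring. apply Hd; auto.
Qed.

Lemma btw_pos s u : 0 < s -> btw 0 s u -> 0 <= u <= s.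
Proof. unfold btw, Rmin, Rmax. destruct Rle_dec; lra. Qed.

Lemma abs_le u s : Rabs u <= s -> -s <= u <= s.
Proof. unfold Rabs; destruct Rcase_abs; lra. Qed.

Lemma eq_of_close A B : (forall e, 0 < e -> Rabs (A - B) < 2 * e) -> A = B.
Proof.
  intros H. destruct (Req_dec (A - B) 0). lra.
  pose proof (Rabs_pos_lt _ H0). specialize (H (Rabs (A - B) / 4)). lra.
Qed.

Ltac eqbs := repeat match goal with |- context [Nat.eqb ?x ?y] => destruct (Nat.eqb_spec x y) end.

Definition pt (a b : nat) (u w : R) : nat -> R :=
  fun m => (if Nat.eqb m a then u else 0) + (if Nat.eqb m b then w else 0).

Lemma pt_00 a b : pt a b 0 0 = origin.
Proof. apply functional_extensionality; intros m. unfold pt, origin. destruct (Nat.eqb m a), (Nat.eqb m b); ring. Qed.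
Lemma pt_upd_b a b u w w' : upd (pt a b u w) b ((if Nat.eqb b a then u else 0) + w') = pt a b u w'.
Proof.
  apply functional_extensionality; intros m. unfold upd, pt.
  eqbs; subst; try lia; ring.
Qed.
Lemma pt_at_b a b u w : pt a b u w b = (if Nat.eqb b a then u else 0) + w.
Proof. unfold pt. rewrite Nat.eqb_refl. auto. Qed.
Lemma pt_upd_a a b u w u' : upd (pt a b u w) a (u' + (if Nat.eqb a b then w else 0)) = pt a b u' w.
Proof.
  apply functional_extensionality; intros m. unfold upd, pt.
  eqbs; subst; try lia; ring.
Qed.
Lemma pt_at_a a b u w : pt a b u w a = u + (if Nat.eqb a b then w else 0).
Proof. unfold pt. rewrite Nat.eqb_refl. auto. Qed.
Lemma pt_bound a b u w m : Rabs (pt a b u w m) <= Rabs u + Rabs w.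
Proof.
  unfold pt. destruct (Nat.eqb m a), (Nat.eqb m b); eapply Rle_trans; try apply Rabs_triang;
  rewrite ?Rabs_R0; pose proof (Rabs_pos u); pose proof (Rabs_pos w); lra.
Qed.

Section Schwarz.
Variables (n : nat) (T eps : R).
Hypothesis (hT : 0 < T) (heps : 0 < eps).
Notation D := (dom n T eps).

Lemma dom_pt t a b u w : 0 <= t < T -> (a < n)%nat -> (b < n)%nat -> Rabs u + Rabs w < eps -> D t (pt a b u w).
Proof.
  intros Ht Ha Hb Huw. split; auto. split.
  - intros k Hk. eapply Rle_lt_trans. apply pt_bound. auto.
  - intros k Hk. unfold pt. destruct (Nat.eqb_spec k a); [lia|]. destruct (Nat.eqb_spec k b); [lia|]. ring.
Qed.

Lemma schwarz_pos F t0 x0 a : smooth_on n D F -> D t0 x0 -> 0 < t0 -> (a < n)%nat ->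
  pd D Dt (pd D (Dx a) F) t0 x0 = pd D (Dx a) (pd D Dt F) t0 x0.
Proof.
  intros HF Hx Ht0 Ha.
  destruct (smooth_pd n T eps heps F (Dx a) HF Ha) as [SFa HFa].
  destruct (smooth_pd n T eps heps F Dt HF I) as [SFt HFt].
  destruct (smooth_pd n T eps heps _ Dt SFa I) as [SFat HFat].
  destruct (smooth_pd n T eps heps _ (Dx a) SFt Ha) as [SFta HFta].
  set (Fa := pd D (Dx a) F) in *. set (Ft := pd D Dt F) in *.
  set (Fat := pd D Dt Fa) in *. set (Fta := pd D (Dx a) Ft) in *.
  pose proof (dom_time_inv _ _ _ _ _ Hx) as Ht.
  destruct Hx as [_ [Hb Hz]]. pose proof (Hb a Ha) as Hxa.
  set (r0 := Rmin (Rmin t0 (T - t0)) (eps - Rabs (x0 a)) / 2).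
  assert (Hr0 : 0 < r0).
  { unfold r0. assert (0 < Rmin (Rmin t0 (T - t0)) (eps - Rabs (x0 a))); [|lra].
    repeat apply Rmin_pos; lra. }
  assert (Hr1 : r0 <= Rmin t0 (T - t0) / 2 /\ r0 <= (eps - Rabs (x0 a)) / 2).
  { unfold r0. pose proof (Rmin_l (Rmin t0 (T - t0)) (eps - Rabs (x0 a))).
    pose proof (Rmin_r (Rmin t0 (T - t0)) (eps - Rabs (x0 a))). lra. }
  pose proof (Rmin_l t0 (T - t0)). pose proof (Rmin_r t0 (T - t0)).
  set (Y := fun w => upd x0 a (x0 a + w)).
  assert (HD : forall u w, Rabs u <= r0 -> Rabs w <= r0 -> D (t0 + u) (Y w)).
  { intros u w Hu Hw. unfold Y. apply dom_upd; auto.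
    - split. unfold Rabs in Hu; destruct Rcase_abs in Hu; lra. split; auto.
    - eapply Rle_lt_trans. apply Rabs_triang. lra. }
  assert (HY : forall w w', upd (Y w) a (x0 a + w') = Y w') by (intros; unfold Y; apply upd_upd).
  assert (HYa : forall w, Y w a = x0 a + w) by (intros; unfold Y; apply upd_eq).
  assert (HY0 : Y 0 = x0) by (unfold Y; rewrite Rplus_0_r; apply upd_same).
  assert (Key : forall s, 0 < s <= r0 -> exists u1 w1 u2 w2,
     Rabs u1 <= s /\ Rabs w1 <= s /\ Rabs u2 <= s /\ Rabs w2 <= s /\
     Fat (t0 + u1) (Y w1) = Fta (t0 + u2) (Y w2)).
  { intros s Hs.
    assert (Hbt : forall u, btw 0 s u -> Rabs u <= s) by
      (intros u Hu; apply btw_pos in Hu; [|lra]; rewrite Rabs_right; lra).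
    destruct (mvt2 (fun u w => F (t0 + u) (Y w)) (fun u w => Fa (t0 + u) (Y w))
                   (fun u w => Fat (t0 + u) (Y w)) s s) as [u1 [w1 [Hu1 [Hw1 E1]]]].
    { intros u w Hu Hw. apply Hbt in Hu. apply Hbt in Hw.
      apply dpl_ext with (f := fun w' => F (t0 + u) (upd (Y w) a (x0 a + w'))); [intros; rewrite HY; auto|].
      apply dpl_shift with (f := fun z => F (t0 + u) (upd (Y w) a z)).
      rewrite <- HYa. apply (has_pd_x_dpl n T eps); [apply HD; lra | exact Ha | apply HFa; apply HD; lra]. }
    { intros u w Hu Hw. apply Hbt in Hu. apply Hbt in Hw.
      apply dpl_shift with (f := fun z => Fa z (Y w)).
      apply (has_pd_t_dpl n T eps); [apply HD; lra | pose proof (abs_le _ _ Hu); lra | apply HFat; apply HD; lra]. }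
    destruct (mvt2 (fun w u => F (t0 + u) (Y w)) (fun w u => Ft (t0 + u) (Y w))
                   (fun w u => Fta (t0 + u) (Y w)) s s) as [w2 [u2 [Hw2 [Hu2 E2]]]].
    { intros w u Hw Hu. apply Hbt in Hu. apply Hbt in Hw.
      apply dpl_shift with (f := fun z => F z (Y w)).
      apply (has_pd_t_dpl n T eps); [apply HD; lra | pose proof (abs_le _ _ Hu); lra | apply HFt; apply HD; lra]. }
    { intros w u Hw Hu. apply Hbt in Hu. apply Hbt in Hw.
      apply dpl_ext with (f := fun w' => Ft (t0 + u) (upd (Y w) a (x0 a + w'))); [intros; rewrite HY; auto|].
      apply dpl_shift with (f := fun z => Ft (t0 + u) (upd (Y w) a z)).
      rewrite <- HYa. apply (has_pd_x_dpl n T eps); [apply HD; lra | exact Ha | apply HFta; apply HD; lra]. }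
    exists u1, w1, u2, w2. repeat split; auto.
    simpl in E1, E2.
    assert (s * s * Fat (t0 + u1) (Y w1) = s * s * Fta (t0 + u2) (Y w2)) by (rewrite <- E1, <- E2; ring).
    apply Rmult_eq_reg_l with (s * s). auto. nra. }
  apply eq_of_close. intros e He.
  assert (Dx0 : D t0 x0) by (split; [lra|split; auto]).
  destruct (smooth_cont n T eps _ SFat t0 x0 Dx0 e He) as [d1 [Hd1 C1]].
  destruct (smooth_cont n T eps _ SFta t0 x0 Dx0 e He) as [d2 [Hd2 C2]].
  set (s := Rmin r0 (Rmin d1 d2) / 2).
  assert (Hs : 0 < s <= r0 /\ s < d1 /\ s < d2).
  { unfold s. pose proof (Rmin_l r0 (Rmin d1 d2)). pose proof (Rmin_r r0 (Rmin d1 d2)).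
    pose proof (Rmin_l d1 d2). pose proof (Rmin_r d1 d2).
    assert (0 < Rmin r0 (Rmin d1 d2)) by (repeat apply Rmin_pos; lra). lra. }
  destruct (Key s (conj (proj1 (proj1 Hs)) (proj2 (proj1 Hs)))) as [u1 [w1 [u2 [w2 [H1 [H2 [H3 [H4 E]]]]]]]].
  assert (Hk : forall w k, Rabs w <= s -> Rabs (Y w k - x0 k) <= s).
  { intros w k Hw. unfold Y, upd. destruct (Nat.eqb_spec k a) as [->|]. replace (x0 a + w - x0 a) with w by ring. auto.
    unfold Rminus. rewrite Rplus_opp_r, Rabs_R0; lra. }
  specialize (C1 (t0 + u1) (Y w1)). specialize (C2 (t0 + u2) (Y w2)).
  assert (A1 : Rabs (Fat (t0 + u1) (Y w1) - Fat t0 x0) < e).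
  { apply C1. apply HD; lra. replace (t0 + u1 - t0) with u1 by ring. lra.
    intros k Hk'. specialize (Hk w1 k H2). lra. }
  assert (A2 : Rabs (Fta (t0 + u2) (Y w2) - Fta t0 x0) < e).
  { apply C2. apply HD; lra. replace (t0 + u2 - t0) with u2 by ring. lra.
    intros k Hk'. specialize (Hk w2 k H4). lra. }
  rewrite E in A1.
  replace (Fat t0 x0 - Fta t0 x0) with (-(Fta (t0 + u2) (Y w2) - Fat t0 x0) + (Fta (t0 + u2) (Y w2) - Fta t0 x0)) by ring.
  eapply Rle_lt_trans. apply Rabs_triang. rewrite Rabs_Ropp. lra.
Qed.

Lemma schwarz F t0 x0 a : smooth_on n D F -> D t0 x0 -> (a < n)%nat ->
  pd D Dt (pd D (Dx a) F) t0 x0 = pd D (Dx a) (pd D Dt F) t0 x0.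
Proof.
  intros HF Hx Ha. destruct (Rlt_dec 0 t0) as [Hp|Hp]. apply schwarz_pos; auto.
  pose proof (dom_time_inv _ _ _ _ _ Hx) as Ht. assert (t0 = 0) by lra. subst t0.
  destruct (smooth_pd n T eps heps F (Dx a) HF Ha) as [SFa HFa].
  destruct (smooth_pd n T eps heps F Dt HF I) as [SFt HFt].
  destruct (smooth_pd n T eps heps _ Dt SFa I) as [SFat HFat].
  destruct (smooth_pd n T eps heps _ (Dx a) SFt Ha) as [SFta HFta].
  apply eq_of_close. intros e He.
  destruct (smooth_cont n T eps _ SFat 0 x0 Hx e He) as [d1 [Hd1 C1]].
  destruct (smooth_cont n T eps _ SFta 0 x0 Hx e He) as [d2 [Hd2 C2]].
  set (t := Rmin (Rmin d1 d2) T / 2).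
  assert (Htt : 0 < t < T /\ t < d1 /\ t < d2).
  { unfold t. pose proof (Rmin_l (Rmin d1 d2) T). pose proof (Rmin_r (Rmin d1 d2) T).
    pose proof (Rmin_l d1 d2). pose proof (Rmin_r d1 d2).
    assert (0 < Rmin (Rmin d1 d2) T) by (repeat apply Rmin_pos; lra). lra. }
  assert (Dt0 : D t x0) by (eapply dom_time; eauto; lra).
  pose proof (schwarz_pos F t x0 a HF Dt0 (proj1 (proj1 Htt)) Ha) as E.
  assert (Hxx : forall k, (k < n)%nat -> Rabs (x0 k - x0 k) < d1 /\ Rabs (x0 k - x0 k) < d2).
  { intros. unfold Rminus. rewrite Rplus_opp_r, Rabs_R0. lra. }
  specialize (C1 t x0 Dt0). specialize (C2 t x0 Dt0).
  assert (A1 : Rabs (pd D Dt (pd D (Dx a) F) t x0 - pd D Dt (pd D (Dx a) F) 0 x0) < e).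
  { apply C1. rewrite Rminus_0_r, Rabs_right; lra. intros k Hk; apply Hxx; auto. }
  assert (A2 : Rabs (pd D (Dx a) (pd D Dt F) t x0 - pd D (Dx a) (pd D Dt F) 0 x0) < e).
  { apply C2. rewrite Rminus_0_r, Rabs_right; lra. intros k Hk; apply Hxx; auto. }
  rewrite E in A1.
  replace (pd D Dt (pd D (Dx a) F) 0 x0 - pd D (Dx a) (pd D Dt F) 0 x0) with
    (-(pd D (Dx a) (pd D Dt F) t x0 - pd D Dt (pd D (Dx a) F) 0 x0) + (pd D (Dx a) (pd D Dt F) t x0 - pd D (Dx a) (pd D Dt F) 0 x0)) by ring.
  eapply Rle_lt_trans. apply Rabs_triang. rewrite Rabs_Ropp. lra.
Qed.

Lemma delta_lim K a b : smooth_on n D K -> (a < n)%nat -> (b < n)%nat ->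
  forall e, 0 < e -> exists d, 0 < d /\ forall s, 0 < s < d ->
    Rabs ((K 0 (pt a b s s) - K 0 (pt a b s 0) - K 0 (pt a b 0 s) + K 0 (pt a b 0 0)) / (s * s)
          - pd D (Dx a) (pd D (Dx b) K) 0 origin) < e.
Proof.
  intros HK Ha Hb e He.
  destruct (smooth_pd n T eps heps K (Dx b) HK Hb) as [SKb HKb].
  destruct (smooth_pd n T eps heps _ (Dx a) SKb Ha) as [SKab HKab].
  set (Kb := pd D (Dx b) K) in *. set (Kab := pd D (Dx a) Kb) in *.
  assert (D0 : D 0 origin).
  { rewrite <- (pt_00 a b). apply dom_pt; auto. lra. rewrite Rabs_R0; lra. }
  destruct (smooth_cont n T eps _ SKab 0 origin D0 e He) as [d1 [Hd1 C1]].
  exists (Rmin d1 eps / 3). split. assert (0 < Rmin d1 eps) by (apply Rmin_pos; lra). lra.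
  intros s Hs. pose proof (Rmin_l d1 eps). pose proof (Rmin_r d1 eps).
  assert (Hbt : forall u, btw 0 s u -> 0 <= u <= s) by (intros u Hu; apply (btw_pos s u); [lra|exact Hu]).
  assert (HD : forall u w, 0 <= u <= s -> 0 <= w <= s -> D 0 (pt a b u w)).
  { intros u w Hu Hw. apply dom_pt; auto. lra. rewrite !Rabs_right; lra. }
  destruct (mvt2 (fun u w => K 0 (pt a b u w)) (fun u w => Kb 0 (pt a b u w))
                 (fun u w => Kab 0 (pt a b u w)) s s) as [u1 [w1 [Hu1 [Hw1 E1]]]].
  { intros u w Hu Hw. apply Hbt in Hu. apply Hbt in Hw.
    apply dpl_ext with (f := fun w' => K 0 (upd (pt a b u w) b ((if Nat.eqb b a then u else 0) + w')));
      [intros; rewrite pt_upd_b; auto|].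
    apply dpl_shift with (f := fun z => K 0 (upd (pt a b u w) b z)).
    rewrite <- pt_at_b. apply (has_pd_x_dpl n T eps); [apply HD; lra | exact Hb | apply HKb; apply HD; lra]. }
  { intros u w Hu Hw. apply Hbt in Hu. apply Hbt in Hw.
    apply dpl_ext with (f := fun u' => Kb 0 (upd (pt a b u w) a (u' + (if Nat.eqb a b then w else 0))));
      [intros; rewrite pt_upd_a; auto|].
    apply dpl_shift' with (f := fun z => Kb 0 (upd (pt a b u w) a z)).
    rewrite <- pt_at_a. apply (has_pd_x_dpl n T eps); [apply HD; lra | exact Ha | apply HKab; apply HD; lra]. }
  simpl in E1. rewrite E1. apply Hbt in Hu1. apply Hbt in Hw1.
  replace (s * s * Kab 0 (pt a b u1 w1) / (s * s)) with (Kab 0 (pt a b u1 w1)) by (field; lra).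
  apply C1. apply HD; lra. rewrite Rminus_0_r, Rabs_R0; lra.
  intros k Hk. unfold origin. rewrite Rminus_0_r. eapply Rle_lt_trans. apply pt_bound.
  rewrite !Rabs_right; lra.
Qed.

End Schwarz.

Definition dGamQ n gi dg dgq ddgq (i m j k : nat) : R :=
  / 2 * Rsum n (fun l => dgi n gi dg i m l * (dgq j k l + dgq k j l - dgq l j k)
                        + gi m l * (ddgq i j k l + ddgq i k j l - ddgq i l j k)).
Definition RupQ n gi dg dgq ddgq (i j k m : nat) : R :=
  dGamQ n gi dg dgq ddgq i m j k - dGamQ n gi dg dgq ddgq j m i k
  + Rsum n (fun p => Gam n gi dg p j k * Gam n gi dgq m i p - Gam n gi dg p i k * Gam n gi dgq m j p).
Definition RiemQ n (g gi : nat -> nat -> R) dg dgq ddgq (i j k l : nat) : R :=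
  Rsum n (fun m => RupQ n gi dg dgq ddgq i j k m * g m l).

Section Scale.
Variables (n : nat) (g gi : nat -> nat -> R) (dg dgq : nat -> nat -> nat -> R)
  (ddg ddgq : nat -> nat -> nat -> nat -> R) (c : R).
Hypothesis Hdg : forall a b d, (a < n)%nat -> (b < n)%nat -> (d < n)%nat -> dg a b d = c * dgq a b d.
Hypothesis Hddg : forall a b d e, (a < n)%nat -> (b < n)%nat -> (d < n)%nat -> (e < n)%nat ->
  ddg a b d e = c * ddgq a b d e.

Lemma Gam_scale m j k : (m < n)%nat -> (j < n)%nat -> (k < n)%nat -> Gam n gi dg m j k = c * Gam n gi dgq m j k.
Proof.
  intros. unfold Gam. rewrite <- Rmult_assoc, (Rmult_comm c), Rmult_assoc. f_equal.
  rewrite <- Rsum_scal. apply Rsum_ext. intros l Hl. rewrite !Hdg by auto. ring.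
Qed.
Lemma dGam_scale i m j k : (i < n)%nat -> (m < n)%nat -> (j < n)%nat -> (k < n)%nat ->
  dGam n gi dg ddg i m j k = c * dGamQ n gi dg dgq ddgq i m j k.
Proof.
  intros. unfold dGam, dGamQ. rewrite <- Rmult_assoc, (Rmult_comm c), Rmult_assoc. f_equal.
  rewrite <- Rsum_scal. apply Rsum_ext. intros l Hl. rewrite !Hdg, !Hddg by auto. ring.
Qed.
Lemma Rup_scale i j k m : (i < n)%nat -> (m < n)%nat -> (j < n)%nat -> (k < n)%nat ->
  Rup n gi dg ddg i j k m = c * RupQ n gi dg dgq ddgq i j k m.
Proof.
  intros. unfold Rup, RupQ. rewrite !dGam_scale by auto.
  rewrite (Rsum_ext n _ (fun p => c * (Gam n gi dg p j k * Gam n gi dgq m i p - Gam n gi dg p i k * Gam n gi dgq m j p))).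
  rewrite Rsum_scal. ring.
  intros p Hp. rewrite (Gam_scale m i p), (Gam_scale m j p) by auto. ring.
Qed.
Lemma Riem_scale i j k l : (i < n)%nat -> (j < n)%nat -> (k < n)%nat -> (l < n)%nat ->
  Riem n g gi dg ddg i j k l = c * RiemQ n g gi dg dgq ddgq i j k l.
Proof.
  intros. unfold Riem, RiemQ. rewrite <- Rsum_scal. apply Rsum_ext. intros m Hm.
  rewrite Rup_scale by auto. ring.
Qed.
End Scale.

Section Lims.
Variables (n : nat) (P : R -> Prop) (x0 : R).
Definition conv2 (f : R -> nat -> nat -> R) l := forall i j, (i < n)%nat -> (j < n)%nat ->
  limit1_in (fun t => f t i j) P (l i j) x0.
Definition conv3 (f : R -> nat -> nat -> nat -> R) l := forall i j k, (i < n)%nat -> (j < n)%nat -> (k < n)%nat ->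
  limit1_in (fun t => f t i j k) P (l i j k) x0.
Definition conv4 (f : R -> nat -> nat -> nat -> nat -> R) l := forall i j k m, (i < n)%nat -> (j < n)%nat ->
  (k < n)%nat -> (m < n)%nat -> limit1_in (fun t => f t i j k m) P (l i j k m) x0.

Variables (g gi : R -> nat -> nat -> R) (dg dgq : R -> nat -> nat -> nat -> R)
  (ddgq : R -> nat -> nat -> nat -> nat -> R).
Variables (gl gil : nat -> nat -> R) (dgl dgql : nat -> nat -> nat -> R) (ddgql : nat -> nat -> nat -> nat -> R).
Hypothesis (Hg : conv2 g gl) (Hgi : conv2 gi gil) (Hdg : conv3 dg dgl) (Hdgq : conv3 dgq dgql) (Hddgq : conv4 ddgq ddgql).

Lemma lim_dgi a m l : (a < n)%nat -> (m < n)%nat -> (l < n)%nat ->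
  limit1_in (fun t => dgi n (gi t) (dg t) a m l) P (dgi n gil dgl a m l) x0.
Proof.
  intros. unfold dgi. apply lim_opp.
  apply (lim_Rsum n P (fun p t => Rsum n (fun q => gi t m p * dg t a p q * gi t q l))). intros p Hp.
  apply (lim_Rsum n P (fun q t => gi t m p * dg t a p q * gi t q l)). intros q Hq.
  apply lim_mul; [apply lim_mul|]; [apply Hgi|apply Hdg|apply Hgi]; auto.
Qed.

Lemma lim_Gam (dd : R -> nat -> nat -> nat -> R) ddl : conv3 dd ddl -> forall m j k, (m < n)%nat -> (j < n)%nat -> (k < n)%nat ->
  limit1_in (fun t => Gam n (gi t) (dd t) m j k) P (Gam n gil ddl m j k) x0.
Proof.
  intros Hd m j k Hm Hj Hk. unfold Gam. apply lim_scal.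
  apply (lim_Rsum n P (fun l t => gi t m l * (dd t j k l + dd t k j l - dd t l j k))). intros l Hl.
  apply lim_mul. apply Hgi; auto. apply lim_minus; [apply lim_plus|]; apply Hd; auto.
Qed.

Lemma lim_dGamQ i m j k : (i < n)%nat -> (m < n)%nat -> (j < n)%nat -> (k < n)%nat ->
  limit1_in (fun t => dGamQ n (gi t) (dg t) (dgq t) (ddgq t) i m j k) P (dGamQ n gil dgl dgql ddgql i m j k) x0.
Proof.
  intros. unfold dGamQ. apply lim_scal.
  apply (lim_Rsum n P (fun l t => dgi n (gi t) (dg t) i m l * (dgq t j k l + dgq t k j l - dgq t l j k)
                        + gi t m l * (ddgq t i j k l + ddgq t i k j l - ddgq t i l j k))). intros l Hl.
  apply lim_plus; apply lim_mul.
  apply lim_dgi; auto. apply lim_minus; [apply lim_plus|]; apply Hdgq; auto.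
  apply Hgi; auto. apply lim_minus; [apply lim_plus|]; apply Hddgq; auto.
Qed.

Lemma lim_RiemQ i j k l : (i < n)%nat -> (j < n)%nat -> (k < n)%nat -> (l < n)%nat ->
  limit1_in (fun t => RiemQ n (g t) (gi t) (dg t) (dgq t) (ddgq t) i j k l) P (RiemQ n gl gil dgl dgql ddgql i j k l) x0.
Proof.
  intros. unfold RiemQ.
  apply (lim_Rsum n P (fun m t => RupQ n (gi t) (dg t) (dgq t) (ddgq t) i j k m * g t m l)). intros m Hm.
  apply lim_mul; [|apply Hg; auto]. unfold RupQ.
  apply lim_plus. apply lim_minus; apply lim_dGamQ; auto.
  apply (lim_Rsum n P (fun p t => Gam n (gi t) (dg t) p j k * Gam n (gi t) (dgq t) m i p - Gam n (gi t) (dg t) p i k * Gam n (gi t) (dgq t) m j p)).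
  intros p Hp. apply lim_minus; apply lim_mul; apply lim_Gam; auto.
Qed.
End Lims.

Definition zero3 : nat -> nat -> nat -> R := fun _ _ _ => 0.

Lemma dgi_zero n gi a m l : dgi n gi zero3 a m l = 0.
Proof. unfold dgi, zero3. rewrite Rsum_zero'. ring. intros. apply Rsum_zero'. intros. ring. Qed.
Lemma Gam_zero n gi m j k : Gam n gi zero3 m j k = 0.
Proof. unfold Gam, zero3. rewrite Rsum_zero'. ring. intros. ring. Qed.

Definition Vform (M : nat -> nat -> nat -> nat -> R) i j k l :=
  / 2 * (M i j k l + M i k j l - M i l j k) - / 2 * (M j i k l + M j k i l - M j l i k).

Lemma dGamQ_flat n dgq M i m j k : (m < n)%nat ->
  dGamQ n kron zero3 dgq M i m j k = / 2 * (M i j k m + M i k j m - M i m j k).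
Proof.
  intros Hm. unfold dGamQ. f_equal.
  rewrite (Rsum_ext n _ (fun l => kron m l * (M i j k l + M i k j l - M i l j k))).
  apply Rsum_kron'; auto. intros. rewrite dgi_zero. ring.
Qed.

Lemma RiemQ_flat n dgq M i j k l : (i < n)%nat -> (j < n)%nat -> (k < n)%nat -> (l < n)%nat ->
  RiemQ n kron kron zero3 dgq M i j k l = Vform M i j k l.
Proof.
  intros. unfold RiemQ.
  rewrite (Rsum_ext n _ (fun m => kron m l * RupQ n kron zero3 dgq M i j k m)) by (intros; ring).
  rewrite Rsum_kron by auto. unfold RupQ.
  rewrite Rsum_zero'. 2:{ intros. rewrite !Gam_zero. ring. }
  rewrite !dGamQ_flat by auto. unfold Vform. ring.
Qed.

Lemma abs_mul_le a b A B : Rabs a <= A -> Rabs b <= B -> Rabs (a * b) <= A * B.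
Proof. intros. rewrite Rabs_mult. apply Rmult_le_compat; auto; apply Rabs_pos. Qed.
Lemma abs_plus_le a b A B : Rabs a <= A -> Rabs b <= B -> Rabs (a + b) <= A + B.
Proof. intros. eapply Rle_trans. apply Rabs_triang. lra. Qed.
Lemma abs_minus_le a b A B : Rabs a <= A -> Rabs b <= B -> Rabs (a - b) <= A + B.
Proof. intros. eapply Rle_trans. apply Rabs_triang. rewrite Rabs_Ropp. lra. Qed.

Section Pert.
Variables (n : nat) (gi : nat -> nat -> R) (dg : nat -> nat -> nat -> R) (ddg : nat -> nat -> nat -> nat -> R)
  (al be ga : R).
Hypothesis (Hal : 0 <= al <= 1) (Hbe : 0 <= be) (Hga : 0 <= ga).
Hypothesis Hgi : forall a b, (a < n)%nat -> (b < n)%nat -> Rabs (gi a b - kron a b) <= al.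
Hypothesis Hdg : forall a b c, (a < n)%nat -> (b < n)%nat -> (c < n)%nat -> Rabs (dg a b c) <= be.
Hypothesis Hddg : forall a b c d, (a < n)%nat -> (b < n)%nat -> (c < n)%nat -> (d < n)%nat -> Rabs (ddg a b c d) <= ga.
Let N := INR n.
Definition Bdgi := N * (N * (2 * be * 2)).
Definition BGam := / 2 * (N * (2 * (be + be + be))).
Definition BdG := / 2 * (N * (Bdgi * (be + be + be) + al * (ga + ga + ga))).
Definition BRup := BdG + BdG + N * (BGam * BGam + BGam * BGam).
Definition BRic := N * BRup.

Lemma gi_le2 a b : (a < n)%nat -> (b < n)%nat -> Rabs (gi a b) <= 2.
Proof.
  intros. pose proof (Hgi a b H H0). pose proof (Rabs_triang_inv (gi a b) (kron a b)).
  assert (Rabs (kron a b) <= 1) by (unfold kron; destruct Nat.eqb; rewrite ?Rabs_R1, ?Rabs_R0; lra). lra.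
Qed.

Lemma dgi_bound a m l : (a < n)%nat -> (m < n)%nat -> (l < n)%nat -> Rabs (dgi n gi dg a m l) <= Bdgi.
Proof.
  intros. unfold dgi, Bdgi. rewrite Rabs_Ropp. apply Rsum_abs. intros p Hp. apply Rsum_abs. intros q Hq.
  apply abs_mul_le; [apply abs_mul_le|]; auto using gi_le2.
Qed.

Lemma Gam_bound m j k : (m < n)%nat -> (j < n)%nat -> (k < n)%nat -> Rabs (Gam n gi dg m j k) <= BGam.
Proof.
  intros. unfold Gam, BGam. apply abs_mul_le. rewrite Rabs_right; lra. apply Rsum_abs. intros l Hl.
  apply abs_mul_le. auto using gi_le2. apply abs_minus_le; [apply abs_plus_le|]; auto.
Qed.

Lemma dGam_bound i m j k : (i < n)%nat -> (m < n)%nat -> (j < n)%nat -> (k < n)%nat ->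
  Rabs (dGam n gi dg ddg i m j k - dGam n kron zero3 ddg i m j k) <= BdG.
Proof.
  intros. unfold dGam, BdG. rewrite <- Rmult_minus_distr_l, <- Rsum_minus. apply abs_mul_le. rewrite Rabs_right; lra.
  apply Rsum_abs. intros l Hl. rewrite dgi_zero. unfold zero3.
  replace (dgi n gi dg i m l * (dg j k l + dg k j l - dg l j k) + gi m l * (ddg i j k l + ddg i k j l - ddg i l j k) -
           (0 * (0 + 0 - 0) + kron m l * (ddg i j k l + ddg i k j l - ddg i l j k)))
    with (dgi n gi dg i m l * (dg j k l + dg k j l - dg l j k) + (gi m l - kron m l) * (ddg i j k l + ddg i k j l - ddg i l j k)) by ring.
  apply abs_plus_le; apply abs_mul_le; auto using dgi_bound.
  apply abs_minus_le; [apply abs_plus_le|]; auto.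
  apply abs_minus_le; [apply abs_plus_le|]; auto.
Qed.

Lemma Rup_bound i j k m : (i < n)%nat -> (j < n)%nat -> (k < n)%nat -> (m < n)%nat ->
  Rabs (Rup n gi dg ddg i j k m - Rup n kron zero3 ddg i j k m) <= BRup.
Proof.
  intros. unfold Rup, BRup.
  rewrite (Rsum_ext n (fun p => Gam n kron zero3 p j k * Gam n kron zero3 m i p - Gam n kron zero3 p i k * Gam n kron zero3 m j p) (fun _ => 0))
    by (intros; rewrite !Gam_zero; ring).
  rewrite Rsum_zero.
  replace (dGam n gi dg ddg i m j k - dGam n gi dg ddg j m i k +
     Rsum n (fun p => Gam n gi dg p j k * Gam n gi dg m i p - Gam n gi dg p i k * Gam n gi dg m j p) -
     (dGam n kron zero3 ddg i m j k - dGam n kron zero3 ddg j m i k + 0))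
  with ((dGam n gi dg ddg i m j k - dGam n kron zero3 ddg i m j k) - (dGam n gi dg ddg j m i k - dGam n kron zero3 ddg j m i k)
       + Rsum n (fun p => Gam n gi dg p j k * Gam n gi dg m i p - Gam n gi dg p i k * Gam n gi dg m j p)) by ring.
  apply abs_plus_le. apply abs_minus_le; apply dGam_bound; auto.
  apply Rsum_abs. intros p Hp. apply abs_minus_le; apply abs_mul_le; apply Gam_bound; auto.
Qed.

Lemma Ric_bound j k : (j < n)%nat -> (k < n)%nat ->
  Rabs (Ric n gi dg ddg j k - Ric n kron zero3 ddg j k) <= BRic.
Proof.
  intros. unfold Ric, BRic. rewrite <- Rsum_minus. apply Rsum_abs. intros i Hi. apply Rup_bound; auto.
Qed.
End Pert.

Section Ext.
Variables (n : nat) (gi gi' : nat -> nat -> R) (dg dg' : nat -> nat -> nat -> R) (ddg ddg' : nat -> nat -> nat -> nat -> R).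
Hypothesis Egi : forall a b, (a < n)%nat -> (b < n)%nat -> gi a b = gi' a b.
Hypothesis Edg : forall a b c, (a < n)%nat -> (b < n)%nat -> (c < n)%nat -> dg a b c = dg' a b c.
Hypothesis Eddg : forall a b c d, (a < n)%nat -> (b < n)%nat -> (c < n)%nat -> (d < n)%nat -> ddg a b c d = ddg' a b c d.

Lemma dgi_ext a m l : (a < n)%nat -> (m < n)%nat -> (l < n)%nat -> dgi n gi dg a m l = dgi n gi' dg' a m l.
Proof. intros. unfold dgi. f_equal. apply Rsum_ext; intros. apply Rsum_ext; intros. rewrite !Egi, Edg by auto. auto. Qed.
Lemma Gam_ext m j k : (m < n)%nat -> (j < n)%nat -> (k < n)%nat -> Gam n gi dg m j k = Gam n gi' dg' m j k.
Proof. intros. unfold Gam. f_equal. apply Rsum_ext; intros. rewrite !Egi, !Edg by auto. auto. Qed.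
Lemma dGam_ext i m j k : (i < n)%nat -> (m < n)%nat -> (j < n)%nat -> (k < n)%nat -> dGam n gi dg ddg i m j k = dGam n gi' dg' ddg' i m j k.
Proof. intros. unfold dGam. f_equal. apply Rsum_ext; intros. rewrite !Egi, !Edg, !Eddg, dgi_ext by auto. auto. Qed.
Lemma Rup_ext i j k m : (i < n)%nat -> (j < n)%nat -> (k < n)%nat -> (m < n)%nat -> Rup n gi dg ddg i j k m = Rup n gi' dg' ddg' i j k m.
Proof. intros. unfold Rup. rewrite !dGam_ext by auto. f_equal. apply Rsum_ext; intros. rewrite !Gam_ext by auto. auto. Qed.
Lemma Ric_ext j k : (j < n)%nat -> (k < n)%nat -> Ric n gi dg ddg j k = Ric n gi' dg' ddg' j k.
Proof. intros. unfold Ric. apply Rsum_ext; intros. apply Rup_ext; auto. Qed.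
Lemma Riem_ext (g g' : nat -> nat -> R) i j k l : (forall a b, (a < n)%nat -> (b < n)%nat -> g a b = g' a b) ->
  (i < n)%nat -> (j < n)%nat -> (k < n)%nat -> (l < n)%nat -> Riem n g gi dg ddg i j k l = Riem n g' gi' dg' ddg' i j k l.
Proof. intros Eg. intros. unfold Riem. apply Rsum_ext; intros. rewrite Rup_ext, Eg by auto. auto. Qed.
End Ext.

Lemma minv_ext n A A' : (forall a b, (a < n)%nat -> (b < n)%nat -> A a b = A' a b) -> minv n A = minv n A'.
Proof.
  intros E. unfold minv. f_equal. apply functional_extensionality. intros B.
  apply propositional_extensionality. split; intros H i j Hi Hj; rewrite <- (H i j Hi Hj); apply Rsum_ext; intros; rewrite E; auto.
Qed.

Ltac cmp := repeat match goal with
  | |- context [Nat.eqb ?x ?y] => destruct (Nat.eqb_spec x y)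
  | |- context [Nat.leb ?x ?y] => destruct (Nat.leb_spec x y) end;
  try (exfalso; lia); try ring.

Lemma Tf_p a b c : Tf a b c = Tf b a c.
Proof. unfold Tf, cc, kron. cmp; subst; cmp. Qed.
Lemma Tf_q a b c : Tf a b c = Tf a c b.
Proof. unfold Tf, cc, kron. cmp; subst; cmp. Qed.
Lemma d2f_sym n a k y : d2f n a k y = d2f n k a y.
Proof. unfold d2f. destruct (Nat.eq_dec a k). subst; auto. rewrite !kron_neq by lia. ring. Qed.

Lemma Tf_abs a b c : Rabs (Tf a b c) <= 6.
Proof.
  unfold Tf, cc, kron. cmp; try (rewrite Rabs_R0; lra);
  match goal with |- Rabs ?x <= _ => assert (0 <= x) by lra; rewrite Rabs_right by lra; lra end.
Qed.
Lemma cc_abs q r : Rabs (cc q r) <= 1.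
Proof. unfold cc. destruct Nat.leb; rewrite ?Rabs_R1, ?Rabs_R0; lra. Qed.
Lemma kron_abs q r : Rabs (kron q r) <= 1.
Proof. unfold kron. destruct Nat.eqb; rewrite ?Rabs_R1, ?Rabs_R0; lra. Qed.

Section Bounds.
Variables (n : nat) (y : nat -> R) (r : R).
Hypothesis Hr : 0 <= r.
Hypothesis Hy : forall m, (m < n)%nat -> Rabs (y m) <= r.
Let N := INR n.
Definition Bdf r := 3 * INR n * r ^ 2.
Definition Bd2 r := (4 + 2 * INR n) * r.

Lemma df_bound k : (k < n)%nat -> Rabs (df n k y) <= Bdf r.
Proof.
  intros Hk. unfold df, Bdf.
  replace (3 * INR n * r ^ 2) with (INR n * (1 * (r * r)) + 2 * r * (INR n * (1 * r))) by ring.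
  apply abs_plus_le. apply Rsum_abs. intros q Hq. apply abs_mul_le. apply cc_abs.
  replace (y q ^ 2) with (y q * y q) by ring. apply abs_mul_le; auto.
  apply abs_mul_le. apply abs_mul_le. rewrite Rabs_right; lra. auto.
  apply Rsum_abs. intros q Hq. apply abs_mul_le. apply cc_abs. auto.
Qed.

Lemma d2f_bound a k : (a < n)%nat -> (k < n)%nat -> Rabs (d2f n a k y) <= Bd2 r.
Proof.
  intros Ha Hk. unfold d2f, Bd2.
  replace ((4 + 2 * INR n) * r) with (2 * 1 * r + 2 * 1 * (INR n * (1 * r)) + 2 * r * 1) by ring.
  apply abs_plus_le; [apply abs_plus_le|]; repeat apply abs_mul_le; auto;
    try (rewrite Rabs_right; lra); try apply cc_abs; try apply kron_abs.
  apply Rsum_abs. intros q Hq. apply abs_mul_le. apply cc_abs. auto.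
Qed.

Lemma gm_bound i j : (i < n)%nat -> (j < n)%nat -> Rabs (gm n y i j - kron i j) <= Bdf r * Bdf r.
Proof. intros. unfold gm. replace (kron i j + df n i y * df n j y - kron i j) with (df n i y * df n j y) by ring.
  apply abs_mul_le; apply df_bound; auto. Qed.

Lemma dg0_bound a i j : (a < n)%nat -> (i < n)%nat -> (j < n)%nat -> Rabs (dg0 n y a i j) <= 2 * Bd2 r * Bdf r.
Proof. intros. unfold dg0. replace (2 * Bd2 r * Bdf r) with (Bd2 r * Bdf r + Bdf r * Bd2 r) by ring.
  apply abs_plus_le; apply abs_mul_le; auto using df_bound, d2f_bound. Qed.

Lemma ddg0_bound a b i j : (a < n)%nat -> (b < n)%nat -> (i < n)%nat -> (j < n)%nat ->
  Rabs (ddg0 n y a b i j) <= 12 * Bdf r + 2 * (Bd2 r * Bd2 r).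
Proof. intros. unfold ddg0.
  replace (12 * Bdf r + 2 * (Bd2 r * Bd2 r)) with (6 * Bdf r + Bd2 r * Bd2 r + Bd2 r * Bd2 r + Bdf r * 6) by ring.
  repeat apply abs_plus_le; apply abs_mul_le; auto using df_bound, d2f_bound, Tf_abs. Qed.
End Bounds.

Definition LF n y j k := Rsum n (fun i => d2f n i i y * d2f n j k y - d2f n i j y * d2f n i k y).

Lemma dGam_flat n ddg i m j k : (m < n)%nat ->
  dGam n kron zero3 ddg i m j k = / 2 * (ddg i j k m + ddg i k j m - ddg i m j k).
Proof.
  intros Hm. unfold dGam. f_equal.
  rewrite (Rsum_ext n _ (fun l => kron m l * (ddg i j k l + ddg i k j l - ddg i l j k))).
  apply Rsum_kron'; auto. intros. rewrite dgi_zero. unfold zero3. ring.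
Qed.

Lemma Ric_flat n y j k : (j < n)%nat -> (k < n)%nat ->
  Ric n kron zero3 (fun a b c d => ddg0 n y a b c d) j k = LF n y j k.
Proof.
  intros Hj Hk. unfold Ric, LF. apply Rsum_ext. intros i Hi. unfold Rup.
  rewrite Rsum_zero' by (intros; rewrite !Gam_zero; ring).
  rewrite !dGam_flat by auto. unfold ddg0.
  rewrite (Tf_q j k i), (Tf_p j i k), (Tf_q k j i), (Tf_p k i j), (Tf_q i k j).
  rewrite (Tf_p j i i), (Tf_q i j i), (Tf_p k i i), (Tf_q i k i).
  rewrite (d2f_sym n k j), (d2f_sym n j i), (d2f_sym n k i).
  lra.
Qed.

Lemma pt_kron a b u w m : pt a b u w m = kron m a * u + kron m b * w.
Proof. unfold pt, kron. destruct (Nat.eqb m a), (Nat.eqb m b); ring. Qed.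

Lemma d2f_pt n a k a0 b0 u w : (a < n)%nat -> (k < n)%nat -> (a0 < n)%nat -> (b0 < n)%nat ->
  d2f n a k (pt a0 b0 u w) = u * Tf a k a0 + w * Tf a k b0.
Proof.
  intros. unfold d2f. rewrite !pt_kron.
  rewrite (Rsum_ext n (fun r => cc k r * pt a0 b0 u w r) (fun r => kron r a0 * (cc k r * u) + kron r b0 * (cc k r * w))) by (intros; rewrite pt_kron; ring).
  rewrite Rsum_plus, !Rsum_kron by auto. unfold Tf. rewrite (kron_sym a a0), (kron_sym a b0). ring.
Qed.

Definition Cf n a b j k := Rsum n (fun i => Tf i i a * Tf j k b + Tf i i b * Tf j k a - Tf i j a * Tf i k b - Tf i j b * Tf i k a).

Lemma LF_delta n a b j k s : (a < n)%nat -> (b < n)%nat -> (j < n)%nat -> (k < n)%nat ->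
  LF n (pt a b s s) j k - LF n (pt a b s 0) j k - LF n (pt a b 0 s) j k + LF n (pt a b 0 0) j k = s * s * Cf n a b j k.
Proof.
  intros. unfold LF, Cf. rewrite <- !Rsum_minus, <- Rsum_plus, <- Rsum_scal. apply Rsum_ext. intros i Hi.
  rewrite !d2f_pt by auto. ring.
Qed.

Lemma cnt_all m a : (m <= S a)%nat -> Rsum m (fun e => cc e a) = INR m.
Proof.
  induction m; intros Hm. simpl; auto.
  cbn [Rsum]. rewrite IHm by lia. unfold cc. destruct (Nat.leb_spec m a); [|lia]. rewrite S_INR. ring.
Qed.
Lemma cnt_le n a : (a < n)%nat -> Rsum n (fun e => cc e a) = INR a + 1.
Proof.
  induction n; intros Hn. lia. cbn [Rsum].
  destruct (Nat.eq_dec a n). subst. rewrite cnt_all by lia. unfold cc. rewrite Nat.leb_refl. ring.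
  rewrite IHn by lia. unfold cc. destruct (Nat.leb_spec n a); [lia|]. ring.
Qed.
Lemma cnt_ge n m : (m <= n)%nat -> Rsum n (fun e => cc m e) = INR n - INR m.
Proof.
  induction n; intros Hn. assert (m = 0%nat) by lia. subst. simpl. ring.
  cbn [Rsum]. destruct (Nat.eq_dec m (S n)).
  - subst. rewrite Rsum_zero'. unfold cc. destruct (Nat.leb_spec (S n) n); [lia|]. rewrite S_INR; ring.
    intros i Hi. unfold cc. destruct (Nat.leb_spec (S n) i); [lia|auto].
  - rewrite IHn by lia. unfold cc. destruct (Nat.leb_spec m n); [|lia]. rewrite S_INR; ring.
Qed.
Definition cnt2 n c d := if Nat.leb c d then INR n - INR d else INR n - INR c.
Lemma cnt_two n c d : (c < n)%nat -> (d < n)%nat -> Rsum n (fun e => cc c e * cc d e) = cnt2 n c d.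
Proof.
  intros. unfold cnt2. destruct (Nat.leb_spec c d).
  - rewrite <- cnt_ge by lia. apply Rsum_ext. intros e He. unfold cc.
    destruct (Nat.leb_spec c e), (Nat.leb_spec d e); try lia; ring.
  - rewrite <- cnt_ge by lia. apply Rsum_ext. intros e He. unfold cc.
    destruct (Nat.leb_spec c e), (Nat.leb_spec d e); try lia; ring.
Qed.

Lemma SA_eq n a : (a < n)%nat -> Rsum n (fun e => Tf e e a) = 2 * INR a + 6.
Proof.
  intros. rewrite (Rsum_ext n _ (fun e => 4 * (kron e a * 1) + 2 * cc e a)).
  rewrite Rsum_plus, !Rsum_scal, Rsum_kron, cnt_le by auto. ring.
  intros e He. unfold Tf. unfold cc at 1 3. rewrite Nat.leb_refl. rewrite kron_eq. ring.
Qed.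

Definition Qf n c a d b :=
  2 * cc a c * Tf a d b + 2 * cc c a * Tf c d b +
  2 * kron c a * (2 * cc c b * cc b d + 2 * cc c d * cc d b + 2 * kron d b * cnt2 n c d).

Lemma Q_eq n c a d b : (a < n)%nat -> (b < n)%nat -> (c < n)%nat -> (d < n)%nat ->
  Rsum n (fun e => Tf e c a * Tf e d b) = Qf n c a d b.
Proof.
  intros. unfold Qf.
  rewrite (Rsum_ext n _ (fun e => kron e a * (2 * cc e c * Tf e d b) + kron e c * (2 * cc c a * Tf e d b)
                                   + 2 * kron c a * (cc c e * Tf e d b))).
  2:{ intros e He. unfold Tf at 1. rewrite (kron_sym c e). ring. }
  rewrite !Rsum_plus, !Rsum_kron, Rsum_scal by auto.

  rewrite (Rsum_ext n _ (fun e => kron e b * (2 * cc c e * cc e d) + kron e d * (2 * cc c e * cc d b)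
                                   + 2 * kron d b * (cc c e * cc d e))).
  2:{ intros e He. unfold Tf. rewrite (kron_sym d e). ring. }
  rewrite !Rsum_plus, !Rsum_kron, Rsum_scal, cnt_two by auto. ring.
Qed.

Lemma Cf_eq n a b c d : (a < n)%nat -> (b < n)%nat -> (c < n)%nat -> (d < n)%nat ->
  Cf n a b c d = (2 * INR a + 6) * Tf c d b + (2 * INR b + 6) * Tf c d a - Qf n c a d b - Qf n c b d a.
Proof.
  intros. unfold Cf.
  rewrite !Rsum_minus, !Rsum_plus, !Rsum_scal_r, !SA_eq, !Q_eq by auto. ring.
Qed.

Definition Vnum n i j k l := Vform (fun a b c d => -2 * Cf n a b c d) i j k l.

Ltac cmp2 := repeat (match goal with
  | |- context [Nat.eqb ?x ?y] => destruct (Nat.eqb_spec x y)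
  | |- context [Nat.leb ?x ?y] => destruct (Nat.leb_spec x y) end; try (exfalso; lia)).

Lemma Vnum_diag n i j : (i < j)%nat -> (j < n)%nat -> Vnum n i j i j = -8 * (INR n - INR j + 1).
Proof.
  intros. unfold Vnum, Vform. rewrite !Cf_eq by lia. unfold Qf, cnt2, Tf, cc, kron.
  cmp2; subst; try lra.
Qed.

Lemma Vnum_zero n i j k l : (i < n)%nat -> (j < n)%nat -> (k < n)%nat -> (l < n)%nat ->
  ~ ((i = k /\ j = l) \/ (i = l /\ j = k)) -> Vnum n i j k l = 0.
Proof.
  intros Hi Hj Hk Hl Hne. unfold Vnum, Vform. rewrite !Cf_eq by lia. unfold Qf, cnt2, Tf, cc, kron.
  cmp2; subst; try lra; exfalso; apply Hne; auto.
Qed.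

Lemma df_origin n k : df n k origin = 0.
Proof. unfold df, origin. rewrite Rsum_zero'. ring. intros. ring. Qed.
Lemma d2f_origin n a k : d2f n a k origin = 0.
Proof. unfold d2f, origin. rewrite (Rsum_zero' n (fun r => cc k r * 0)). ring. intros. ring. Qed.
Lemma dg0_origin n a i j : dg0 n origin a i j = 0.
Proof. unfold dg0. rewrite !df_origin, !d2f_origin. ring. Qed.
Lemma ddg0_origin n a b i j : ddg0 n origin a b i j = 0.
Proof. unfold ddg0. rewrite !df_origin, !d2f_origin. ring. Qed.
Lemma gm_origin n i j : gm n origin i j = kron i j.
Proof. unfold gm. rewrite !df_origin. ring. Qed.

Definition zero4 : nat -> nat -> nat -> nat -> R := fun _ _ _ _ => 0.
Lemma Riem_flat0 n g gi i j k l : Riem n g gi zero3 zero4 i j k l = 0.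
Proof.
  unfold Riem. apply Rsum_zero'. intros m Hm. unfold Rup.
  assert (E : forall a b c d, dGam n gi zero3 zero4 a b c d = 0).
  { intros. unfold dGam. rewrite Rsum_zero'. ring. intros. rewrite dgi_zero. unfold zero3, zero4. ring. }
  rewrite !E, Rsum_zero'. ring. intros. rewrite !Gam_zero. ring.
Qed.

Lemma small_r c r : 0 <= c -> 0 <= r <= 1 -> r <= 1 / (2 * c + 2) -> c * r ^ 4 <= 1 / 2.
Proof.
  intros Hc Hr Hr2.
  assert (r ^ 4 <= r).
  { replace (r ^ 4) with (r * (r * r * r)) by ring.
    assert (r * r * r <= 1). { assert (r * r <= 1) by nra. nra. }
    nra. }
  assert (c * r <= c / (2 * c + 2)).
  { unfold Rdiv. apply Rmult_le_compat_l; auto. unfold Rdiv in Hr2. lra. }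
  assert (c / (2 * c + 2) <= 1 / 2).
  { apply Rmult_le_reg_r with (2 * c + 2). lra. unfold Rdiv. field_simplify; lra. }
  nra.
Qed.

Lemma fin_unif n (Q : nat -> R -> Prop) :
  (forall i d d', Q i d -> 0 < d' <= d -> Q i d') ->
  (forall i, (i < n)%nat -> exists d, 0 < d /\ Q i d) ->
  exists d, 0 < d /\ forall i, (i < n)%nat -> Q i d.
Proof.
  intros Hm. induction n; intros H.
  - exists 1. split. lra. intros; lia.
  - destruct IHn as [d1 [Hd1 H1]]. intros; apply H; lia.
    destruct (H n (Nat.lt_succ_diag_r n)) as [d2 [Hd2 H2]].
    exists (Rmin d1 d2). split. apply Rmin_pos; auto.
    intros i Hi. destruct (Nat.eq_dec i n). subst. eapply Hm; eauto. split. apply Rmin_pos; auto. apply Rmin_r.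
    eapply Hm. apply H1. lia. split. apply Rmin_pos; auto. apply Rmin_l.
Qed.

Lemma min6 q1 q2 q3 q4 q5 q6 : 0 < q1 -> 0 < q2 -> 0 < q3 -> 0 < q4 -> 0 < q5 -> 0 < q6 ->
  exists s, 0 < s /\ s <= q1 /\ s <= q2 /\ s <= q3 /\ s <= q4 /\ s <= q5 /\ s <= q6.
Proof.
  intros. exists (Rmin q1 (Rmin q2 (Rmin q3 (Rmin q4 (Rmin q5 q6))))).
  split. repeat apply Rmin_pos; auto.
  pose proof (Rmin_l q1 (Rmin q2 (Rmin q3 (Rmin q4 (Rmin q5 q6))))).
  pose proof (Rmin_r q1 (Rmin q2 (Rmin q3 (Rmin q4 (Rmin q5 q6))))).
  pose proof (Rmin_l q2 (Rmin q3 (Rmin q4 (Rmin q5 q6)))).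
  pose proof (Rmin_r q2 (Rmin q3 (Rmin q4 (Rmin q5 q6)))).
  pose proof (Rmin_l q3 (Rmin q4 (Rmin q5 q6))). pose proof (Rmin_r q3 (Rmin q4 (Rmin q5 q6))).
  pose proof (Rmin_l q4 (Rmin q5 q6)). pose proof (Rmin_r q4 (Rmin q5 q6)).
  pose proof (Rmin_l q5 q6). pose proof (Rmin_r q5 q6).
  repeat split; lra.
Qed.

Section Main.
Variables (n : nat) (T eps : R) (G : R -> (nat -> R) -> nat -> nat -> R).
Hypotheses (hT : 0 < T) (heps : 0 < eps) (HR : is_ricci_flow n (dom n T eps) G)
  (Hsl : forall x, dom n T eps 0 x -> forall i j, (i < n)%nat -> (j < n)%nat ->
      G 0 x i j = graph_metric (f_ex n) x i j).
Notation D := (dom n T eps).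

Lemma Gsm i j : (i < n)%nat -> (j < n)%nat -> smooth_on n D (fun t x => G t x i j).
Proof. destruct HR as [H _]. auto. Qed.
Lemma Gflow t x i j : D t x -> (i < n)%nat -> (j < n)%nat ->
  has_pd D Dt (fun t x => G t x i j) t x (-2 * RicF n D G t x i j).
Proof. destruct HR as [_ [_ [_ H]]]. auto. Qed.

Lemma D0 : D 0 origin.
Proof. split. lra. split. intros. unfold origin. rewrite Rabs_R0. lra. intros. reflexivity. Qed.

Lemma G0_gm y i j : D 0 y -> (i < n)%nat -> (j < n)%nat -> G 0 y i j = gm n y i j.
Proof. intros. rewrite Hsl by auto. apply graph_metric_gm; auto. Qed.

Lemma dgF_slice y a i j : D 0 y -> (a < n)%nat -> (i < n)%nat -> (j < n)%nat -> dgF D G 0 y a i j = dg0 n y a i j.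
Proof.
  intros Hy Ha Hi Hj. unfold dgF. apply (pd_eq n T eps heps); auto. simpl.
  apply dw_ext with (phi := fun s => gm n (upd y a s) i j).
  simpl. rewrite upd_same; auto.
  intros s Hs. simpl. symmetry. apply G0_gm; auto.
  apply dpl_dw. apply dpl_gm; auto.
Qed.

Lemma ddgF_slice y a b i j : D 0 y -> (a < n)%nat -> (b < n)%nat -> (i < n)%nat -> (j < n)%nat ->
  ddgF D G 0 y a b i j = ddg0 n y a b i j.
Proof.
  intros Hy Ha Hb Hi Hj. unfold ddgF. apply (pd_eq n T eps heps); auto. simpl.
  apply dw_ext with (phi := fun s => dg0 n (upd y a s) b i j).
  simpl. rewrite upd_same; auto.
  intros s Hs. simpl. symmetry. apply dgF_slice; auto.
  apply dpl_dw. apply dpl_dg0; auto.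
Qed.

Lemma RicF_slice y j k : D 0 y -> (j < n)%nat -> (k < n)%nat ->
  RicF n D G 0 y j k = Ric n (minv n (gm n y)) (fun a b c => dg0 n y a b c) (fun a b c d => ddg0 n y a b c d) j k.
Proof.
  intros Hy Hj Hk. unfold RicF. rewrite (minv_ext n (G 0 y) (gm n y)) by (intros; apply G0_gm; auto).
  apply Ric_ext; auto; intros; [apply dgF_slice|apply ddgF_slice]; auto.
Qed.

Lemma part1 i j : (i < n)%nat -> (j < n)%nat -> G 0 origin i j = kron i j.
Proof. intros. rewrite G0_gm by (auto; apply D0). apply gm_origin. Qed.

Lemma part2 i j k l : (i < n)%nat -> (j < n)%nat -> (k < n)%nat -> (l < n)%nat ->
  RmF n D G 0 origin i j k l = 0.
Proof.
  intros. unfold RmF.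
  assert (E1 : forall a b c, (a < n)%nat -> (b < n)%nat -> (c < n)%nat -> dgF D G 0 origin a b c = zero3 a b c).
  { intros. rewrite dgF_slice by (auto; apply D0). apply dg0_origin. }
  assert (E2 : forall a b c d, (a < n)%nat -> (b < n)%nat -> (c < n)%nat -> (d < n)%nat -> ddgF D G 0 origin a b c d = zero4 a b c d).
  { intros. rewrite ddgF_slice by (auto; apply D0). apply ddg0_origin. }
  rewrite (Riem_ext n _ _ _ _ _ _ (fun a b _ _ => eq_refl) E1 E2 (G 0 origin) (G 0 origin)) by auto.
  apply Riem_flat0.
Qed.

Definition Kc := BRic n (2 * (Bdf n 1 * Bdf n 1)) (2 * Bd2 n 1 * Bdf n 1) (12 * Bdf n 1 + 2 * (Bd2 n 1 * Bd2 n 1)).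
Lemma BRic_scale r : BRic n (2 * (Bdf n r * Bdf n r)) (2 * Bd2 n r * Bdf n r) (12 * Bdf n r + 2 * (Bd2 n r * Bd2 n r)) = Kc * r ^ 6.
Proof. unfold Kc, BRic, BRup, BdG, BGam, Bdgi, Bdf, Bd2. ring. Qed.

Lemma err_bound y r j k : D 0 y -> (forall m, (m < n)%nat -> Rabs (y m) <= r) ->
  INR n * (Bdf n r * Bdf n r) <= 1 / 2 -> 2 * (Bdf n r * Bdf n r) <= 1 -> (j < n)%nat -> (k < n)%nat ->
  Rabs (RicF n D G 0 y j k - LF n y j k) <= Kc * r ^ 6.
Proof.
  intros Hy Hr H1 H2 Hj Hk. rewrite RicF_slice, <- Ric_flat, <- BRic_scale by auto.
  assert (Hb : 0 <= Bdf n r * Bdf n r) by (apply Rle_0_sqr).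
  apply Ric_bound; auto.
  - split; lra.
  - intros. apply (minv_near n (gm n y) (Bdf n r * Bdf n r)); auto. intros; apply gm_bound; auto.
  - intros. apply dg0_bound; auto.
  - intros. apply ddg0_bound; auto.
Qed.

Lemma Gt_slice c d y : D 0 y -> (c < n)%nat -> (d < n)%nat ->
  pd D Dt (fun t x => G t x c d) 0 y = -2 * RicF n D G 0 y c d.
Proof. intros. apply (pd_eq n T eps heps); auto. exact I. apply Gflow; auto. Qed.

Lemma M_value a b c d : (a < n)%nat -> (b < n)%nat -> (c < n)%nat -> (d < n)%nat ->
  pd D (Dx a) (pd D (Dx b) (pd D Dt (fun t x => G t x c d))) 0 origin = -2 * Cf n a b c d.
Proof.
  intros Ha Hb Hc Hd.
  set (K := pd D Dt (fun t x => G t x c d)).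
  assert (SK : smooth_on n D K) by exact (proj1 (smooth_pd n T eps heps _ Dt (Gsm c d Hc Hd) I)).
  apply eq_of_close. intros e He.
  destruct (delta_lim n T eps hT heps K a b SK Ha Hb e He) as [de [Hde Hdl]].
  set (N := INR n). assert (HN : 0 <= N) by apply pos_INR.
  set (c1 := 9 * N ^ 3). set (c2 := 9 * N ^ 2). set (c3 := 1024 * Rabs Kc / e).
  assert (Hc1 : 0 <= c1) by (unfold c1; apply Rmult_le_pos; [lra|apply pow_le; auto]).
  assert (Hc2 : 0 <= c2) by (unfold c2; apply Rmult_le_pos; [lra|apply pow_le; auto]).
  assert (Hc3 : 0 <= c3) by (unfold c3; apply Rmult_le_pos; [apply Rmult_le_pos; [lra|apply Rabs_pos]|left; apply Rinv_0_lt_compat; auto]).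
  assert (P1 : 0 < 1 / (2 * c1 + 2)) by (apply Rdiv_lt_0_compat; lra).
  assert (P2 : 0 < 1 / (2 * c2 + 2)) by (apply Rdiv_lt_0_compat; lra).
  assert (P3 : 0 < 1 / (2 * c3 + 2)) by (apply Rdiv_lt_0_compat; lra).
  destruct (min6 (1/2) ((1 / (2 * c1 + 2)) / 2) ((1 / (2 * c2 + 2)) / 2) (eps / 4) (de / 2) (1 / (2 * c3 + 2)))
    as [s [S0 [S1 [S2 [S3 [S4 [S5 S6]]]]]]]; try lra.
  assert (Hs : 0 < s /\ s <= 1/2 /\ 2 * s <= 1 / (2 * c1 + 2) /\ 2 * s <= 1 / (2 * c2 + 2) /\ 2 * s < eps /\ s < de
               /\ s <= 1 / (2 * c3 + 2)) by (repeat split; lra).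
  destruct Hs as [Hs0 [Hs1 [Hs2 [Hs3 [Hs4 [Hs5 Hs6]]]]]].
  specialize (Hdl s (conj Hs0 Hs5)).
  set (r := 2 * s).
  assert (Hr : 0 <= r <= 1) by (unfold r; lra).
  assert (HB1 : N * (Bdf n r * Bdf n r) <= 1 / 2).
  { replace (N * (Bdf n r * Bdf n r)) with (c1 * r ^ 4) by (unfold c1, Bdf, N; ring). apply small_r; auto. }
  assert (HB2 : 2 * (Bdf n r * Bdf n r) <= 1).
  { replace (2 * (Bdf n r * Bdf n r)) with (2 * (c2 * r ^ 4)) by (unfold c2, Bdf, N; ring).
    assert (c2 * r ^ 4 <= 1 / 2) by (apply small_r; auto). lra. }
  assert (HDp : forall u w, 0 <= u <= s -> 0 <= w <= s -> D 0 (pt a b u w)).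
  { intros u w Hu Hw. apply dom_pt; auto. lra. rewrite !Rabs_right; lra. }
  assert (HE : forall u w, 0 <= u <= s -> 0 <= w <= s ->
     Rabs (RicF n D G 0 (pt a b u w) c d - LF n (pt a b u w) c d) <= Rabs Kc * r ^ 6).
  { intros u w Hu Hw. eapply Rle_trans. apply err_bound with (r := r); auto.
    intros m Hm. eapply Rle_trans. apply pt_bound. rewrite !Rabs_right; unfold r; lra.
    apply Rmult_le_compat_r. apply pow_le; lra. apply Rle_abs. }
  assert (Hz : 0 <= s <= s) by lra. assert (Hz0 : 0 <= 0 <= s) by lra.
  pose proof (HE s s Hz Hz) as E1. pose proof (HE s 0 Hz Hz0) as E2.
  pose proof (HE 0 s Hz0 Hz) as E3. pose proof (HE 0 0 Hz0 Hz0) as E4.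
  unfold K in Hdl. rewrite !Gt_slice in Hdl by (auto; apply HDp; lra).
  pose proof (LF_delta n a b c d s Ha Hb Hc Hd) as EL.
  set (X := (RicF n D G 0 (pt a b s s) c d - LF n (pt a b s s) c d) - (RicF n D G 0 (pt a b s 0) c d - LF n (pt a b s 0) c d)
            - (RicF n D G 0 (pt a b 0 s) c d - LF n (pt a b 0 s) c d) + (RicF n D G 0 (pt a b 0 0) c d - LF n (pt a b 0 0) c d)).
  assert (HX : Rabs X <= 4 * (Rabs Kc * r ^ 6)).
  { unfold X. repeat (eapply Rle_trans; [apply Rabs_triang|]). rewrite ?Rabs_Ropp.
    unfold Rminus at 1 2. eapply Rle_trans. apply Rplus_le_compat_r. apply Rabs_triang.
    eapply Rle_trans. apply Rplus_le_compat_r. apply Rplus_le_compat_r. apply Rabs_triang.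
    rewrite !Rabs_Ropp. lra. }
  assert (EQ : (-2 * RicF n D G 0 (pt a b s s) c d - -2 * RicF n D G 0 (pt a b s 0) c d - -2 * RicF n D G 0 (pt a b 0 s) c d +
      -2 * RicF n D G 0 (pt a b 0 0) c d) / (s * s) - -2 * Cf n a b c d = -2 * X / (s * s)).
  { assert (ECf : Cf n a b c d = (LF n (pt a b s s) c d - LF n (pt a b s 0) c d - LF n (pt a b 0 s) c d + LF n (pt a b 0 0) c d) / (s * s))
      by (rewrite EL; field; lra).
    rewrite ECf. unfold X. field. lra. }

  assert (HQ : Rabs (-2 * X / (s * s)) <= 512 * Rabs Kc * s ^ 4).
  { unfold Rdiv. rewrite Rabs_mult, Rabs_mult, Rabs_Rinv by nra. rewrite (Rabs_right (s * s)) by nra.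
    rewrite Rabs_left by lra.
    replace (512 * Rabs Kc * s ^ 4) with ((- -2) * (4 * (Rabs Kc * r ^ 6)) * / (s * s)) by (unfold r; field; lra).
    apply Rmult_le_compat_r. left; apply Rinv_0_lt_compat; nra.
    apply Rmult_le_compat_l; lra. }
  assert (HS : 512 * Rabs Kc * s ^ 4 <= e / 4).
  { assert (c3 * s ^ 4 <= 1 / 2) by (apply small_r; auto; lra).
    unfold c3 in H. replace (512 * Rabs Kc * s ^ 4) with (1024 * Rabs Kc / e * s ^ 4 * (e / 2)) by (field; lra).
    nra. }
  replace (pd D (Dx a) (pd D (Dx b) K) 0 origin - -2 * Cf n a b c d) with
    ((pd D (Dx a) (pd D (Dx b) K) 0 origin - ((-2 * RicF n D G 0 (pt a b s s) c d - -2 * RicF n D G 0 (pt a b s 0) c d - -2 * RicF n D G 0 (pt a b 0 s) c d +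
      -2 * RicF n D G 0 (pt a b 0 0) c d) / (s * s))) + (-2 * X / (s * s))) by (rewrite <- EQ; ring).
  eapply Rle_lt_trans. apply Rabs_triang. rewrite Rabs_minus_sym. unfold K. lra.
Qed.

Lemma ddg_deriv a b c d : (a < n)%nat -> (b < n)%nat -> (c < n)%nat -> (d < n)%nat ->
  has_pd D Dt (fun t x => ddgF D G t x a b c d) 0 origin (-2 * Cf n a b c d).
Proof.
  intros Ha Hb Hc Hd.
  set (Gcd := fun t x => G t x c d).
  pose proof (Gsm c d Hc Hd) as SG. fold Gcd in SG.
  destruct (smooth_pd n T eps heps Gcd (Dx b) SG Hb) as [S1 _].
  destruct (smooth_pd n T eps heps _ (Dx a) S1 Ha) as [S2 _].
  destruct (smooth_pd n T eps heps _ Dt S2 I) as [_ H2].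
  specialize (H2 0 origin D0).
  rewrite (schwarz n T eps hT heps _ 0 origin a S1 D0 Ha) in H2.
  rewrite (pd_ext n T eps (Dx a) (pd D Dt (pd D (Dx b) Gcd)) (pd D (Dx b) (pd D Dt Gcd)) 0 origin D0 Ha) in H2.
  2:{ intros t x Hx. apply schwarz; auto. }
  unfold Gcd in H2. rewrite M_value in H2 by auto. exact H2.
Qed.

Lemma dg_deriv a c d : (a < n)%nat -> (c < n)%nat -> (d < n)%nat ->
  has_pd D Dt (fun t x => dgF D G t x a c d) 0 origin (pd D Dt (pd D (Dx a) (fun t x => G t x c d)) 0 origin).
Proof.
  intros Ha Hc Hd.
  destruct (smooth_pd n T eps heps _ (Dx a) (Gsm c d Hc Hd) Ha) as [S1 _].
  destruct (smooth_pd n T eps heps _ Dt S1 I) as [_ H2]. apply H2. apply D0.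
Qed.

Definition Pt := fun t => D t origin /\ t <> 0.

Lemma cont_lim F : smooth_on n D F -> limit1_in (fun t => F t origin) Pt (F 0 origin) 0.
Proof.
  intros SF e He. destruct (smooth_cont n T eps F SF 0 origin D0 e He) as [d [Hd C]].
  exists d. split; auto. intros t [[Ht Hne] Hdt]. simpl in *. unfold R_dist in *.
  apply C; auto. intros. unfold Rminus. rewrite Rplus_opp_r, Rabs_R0. auto.
Qed.

Lemma deriv_lim F l : has_pd D Dt F 0 origin l -> F 0 origin = 0 ->
  limit1_in (fun t => F t origin / t) Pt l 0.
Proof.
  intros H E. simpl in H. unfold deriv_within in H. eapply lim_ext; [|exact H].
  intros t [Ht Hne]. rewrite E. simpl. unfold Rdiv. ring_simplify (t - 0). ring.
Qed.

Lemma minv_lim i j : (i < n)%nat -> (j < n)%nat -> limit1_in (fun t => minv n (G t origin) i j) Pt (kron i j) 0.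
Proof.
  intros Hi Hj e He.
  set (N := INR n). assert (HN : 0 <= N) by apply pos_INR.
  set (al := Rmin (e / 4) (1 / (2 * N + 2))).
  assert (Hal : 0 < al) by (apply Rmin_pos; [lra|apply Rdiv_lt_0_compat; lra]).
  assert (Hal1 : al <= e / 4) by apply Rmin_l. assert (Hal2 : al <= 1 / (2 * N + 2)) by apply Rmin_r.
  destruct (fin_unif n (fun a d => forall b, (b < n)%nat -> forall t, Pt t -> Rabs (t - 0) < d ->
                 Rabs (G t origin a b - kron a b) < al)) as [d [Hd Hall]].
  - intros a d d' H [H1 H2] b Hb t Ht Htd. apply H; auto. lra.
  - intros a Ha. apply fin_unif.
    + intros b d d' H [H1 H2] t Ht Htd. apply H; auto. lra.
    + intros b Hb. destruct (cont_lim _ (Gsm a b Ha Hb) al Hal) as [d [Hd Hc]].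
      exists d. split; auto. intros t Ht Htd. rewrite <- (part1 a b) by auto. apply Hc. split; auto.
  - exists d. split; auto. intros t [Ht Htd]. simpl in *. unfold R_dist in *.
    destruct (minv_near n (G t origin) al) as [_ Hm].
    + lra.
    + apply Rle_trans with (N * (1 / (2 * N + 2))). apply Rmult_le_compat_l; auto.
      apply Rmult_le_reg_r with (2 * N + 2). lra. unfold Rdiv. field_simplify; lra.
    + intros a b Ha Hb. left. apply Hall; auto.
    + specialize (Hm i j Hi Hj). lra.
Qed.

Lemma Rm_deriv i j k l : (i < n)%nat -> (j < n)%nat -> (k < n)%nat -> (l < n)%nat ->
  has_pd D Dt (fun t x => RmF n D G t x i j k l) 0 origin (Vnum n i j k l).
Proof.
  intros Hi Hj Hk Hl. simpl. unfold deriv_within.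
  apply lim_ext with (f := fun t => RiemQ n (G t origin) (minv n (G t origin)) (dgF D G t origin)
      (fun a b c => dgF D G t origin a b c / t) (fun a b c d => ddgF D G t origin a b c d / t) i j k l).
  - intros t [Ht Hne]. rewrite part2 by auto. unfold RmF.
    rewrite (Riem_scale n _ _ _ (fun a b c => dgF D G t origin a b c / t) _ (fun a b c d => ddgF D G t origin a b c d / t) t)
      by (auto; intros; field; auto).
    field. auto.
  - eapply lim_eq; [|apply lim_RiemQ with (gl := kron) (gil := kron) (dgl := zero3)
        (dgql := fun a c d => pd D Dt (pd D (Dx a) (fun t x => G t x c d)) 0 origin)
        (ddgql := fun a b c d => -2 * Cf n a b c d)].
    + rewrite RiemQ_flat by auto. reflexivity.
    + intros a b Ha Hb. eapply lim_eq; [apply part1; auto|]. apply (cont_lim (fun t x => G t x a b)). apply Gsm; auto.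
    + intros a b Ha Hb. apply minv_lim; auto.
    + intros a b c Ha Hb Hc. eapply lim_eq; [|apply (cont_lim (fun t x => dgF D G t x a b c))].
      rewrite dgF_slice by (auto; apply D0). rewrite dg0_origin. reflexivity.
      exact (proj1 (smooth_pd n T eps heps _ (Dx a) (Gsm b c Hb Hc) Ha)).
    + intros a b c Ha Hb Hc. apply (deriv_lim (fun t x => dgF D G t x a b c)). apply dg_deriv; auto.
      rewrite dgF_slice by (auto; apply D0). apply dg0_origin.
    + intros a b c d Ha Hb Hc Hd. apply (deriv_lim (fun t x => ddgF D G t x a b c d)). apply ddg_deriv; auto.
      rewrite ddgF_slice by (auto; apply D0). apply ddg0_origin.
    + auto. + auto. + auto. + auto.
Qed.

End Main.

Theorem mainTheorem2 (n : nat) (hn : (2 <= n)%nat) (T eps : R) (hT : 0 < T) (heps : 0 < eps)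
  (G : R -> (nat -> R) -> nat -> nat -> R) :
  is_ricci_flow n (dom n T eps) G ->
  (forall x, dom n T eps 0 x -> forall i j, (i < n)%nat -> (j < n)%nat ->
      G 0 x i j = graph_metric (f_ex n) x i j) ->
  (forall i j, (i < n)%nat -> (j < n)%nat -> G 0 origin i j = kron i j) /\
  (forall i j k l, (i < n)%nat -> (j < n)%nat -> (k < n)%nat -> (l < n)%nat ->
      RmF n (dom n T eps) G 0 origin i j k l = 0) /\
  (forall i j k l, (i < n)%nat -> (j < n)%nat -> (k < n)%nat -> (l < n)%nat ->
      ~ ((i = k /\ j = l) \/ (i = l /\ j = k)) ->
      has_pd (dom n T eps) Dt (fun t x => RmF n (dom n T eps) G t x i j k l) 0 origin 0) /\
  (forall i j, (i < j)%nat -> (j < n)%nat ->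
      has_pd (dom n T eps) Dt (fun t x => RmF n (dom n T eps) G t x i j i j) 0 origin
        (-8 * (INR n - INR j + 1)) /\ -8 * (INR n - INR j + 1) < 0) /\
  (exists i j k l, (i < n)%nat /\ (j < n)%nat /\ (k < n)%nat /\ (l < n)%nat /\
      pd (dom n T eps) Dt (fun t x => RmF n (dom n T eps) G t x i j k l) 0 origin <> 0).
Proof.
  intros HR Hsl.
  split; [|split; [|split; [|split]]].
  - intros i j Hi Hj. exact (part1 n T eps G hT heps Hsl i j Hi Hj).
  - intros i j k l Hi Hj Hk Hl. exact (part2 n T eps G hT heps Hsl i j k l Hi Hj Hk Hl).
  - intros i j k l Hi Hj Hk Hl Hne.
    pose proof (Rm_deriv n T eps G hT heps HR Hsl i j k l Hi Hj Hk Hl) as H.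
    rewrite Vnum_zero in H by auto. exact H.
  - intros i j Hij Hjn. split.
    + rewrite <- (Vnum_diag n i j) by auto. apply Rm_deriv; auto; lia.
    + assert (INR j < INR n) by (apply lt_INR; auto). lra.
  - exists 0%nat, 1%nat, 0%nat, 1%nat. repeat split; try lia.
    rewrite (pd_eq n T eps heps Dt _ 0 origin (Vnum n 0 1 0 1)).
    + rewrite Vnum_diag by lia. assert (2 <= INR n) by (replace 2 with (INR 2) by (simpl; ring); apply le_INR; auto).
      simpl INR. lra.
    + exact (D0 n T eps hT heps).
    + exact I.
    + apply Rm_deriv; auto; lia.
Qed.
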